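(* Every probabilistic function computed by a probabilistic Turing machine is probabilistic recursive: $\mathscr{PC}\subseteq\mathscr{PR}$.
   Context: A pseudodistribution on a countable set $X$ is $\mathcal D:X\to[0,1]$ with $\sum_x\mathcal D(x)\le1$; $\mathcal D(X)$ is their set. A PF of arity $k$ is a function $\mathbb{N}^k\to\mathcal D(\mathbb{N})$. Basic PFs: $z(n)(0)=1$; $s(n)(n+1)=1$; $\Pi^n_m(k_1,\dots,k_n)(k_m)=1$; $r(x)(x)=r(x)(x+1)=1/2$ (other values $0$). Generalized composition $(f\odot(g_1,\dots,g_n))(\vec x)(y)=\sum_{z_1,\dots,z_n} f(z_1,\dots,z_n)(y)\prod_i g_i(\vec x)(z_i)$; primitive recursion $h=\mathrm{rec}(f,g)$: $h(\vec x,0)=f(\vec x)$, $h(\vec x,y+1)(w)=\sum_z h(\vec x,y)(z)\, g(\vec x,y,z)(w)$; minimization $\mu f(\vec x)(y)=f(\vec x,y)(0)\prod_{z<y}\sum_{k>0}f(\vec x,z)(k)$. $\mathscr{PR}$ is the smallest class of PFs containing the basic PFs and closed under these three operations. PTMs: Turing machines with tape alphabet $\Sigma_b\supseteq\{0,1\}$ plus blank, states $Q$, initial $q_s$, final states $Q_f$, and two transition functions $\delta_0,\delta_1$ on non-final configurations, each applied with probability $1/2$; configurations $\langle s,a,t,q\rangle$, initial configuration on $a\cdot v$ is $\langle\varepsilon,a,v,q_s\rangle$, final configuration with output $s$ is $\langle s,a,\varepsilon,q\rangle$, $q\in Q_f$. $\mathcal{IO}_M(s)(t)=\sum 2^{-|b|}$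 over choice sequences $b\in\{0,1\}^*$ that from the initial configuration on $s$ first reach a final configuration with output $t$ after exactly $|b|$ steps. With $n\mapsto\overline n$ the length-lexicographic bijection $\mathbb{N}\to\{0,1\}^*$ and $\langle\vec x\rangle$ a fixed computable string encoding of tuples, $\mathscr{PC}$ is the set of PFs $f$ with $f(\vec x)(y)=\mathcal{IO}_M(\langle\vec x\rangle)(\overline y)$ for some PTM $M$ and all $\vec x,y$. *)

(* Defs.v *)
From Stdlib Require Import Reals List FinFun ClassicalEpsilon.
From Stdlib Require Vector Fin.
Import ListNotations.
Open Scope R_scope.

(* The sum of a series (as a limit of partial sums, [infinite_sum]); all series
   used below have nonnegative terms and converge (value <= 1). *)
Definition nsum (f : nat -> R) : R :=
  epsilon (inhabits 0%R) (fun l => infinite_sum f l).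

(* A PF of arity k : N^k -> (pseudo)distributions on N. *)
Definition PF (k : nat) : Type := Vector.t nat k -> nat -> R.

Fixpoint sumvec (n : nat) : (Vector.t nat n -> R) -> R :=
  match n with
  | O => fun F => F (Vector.nil nat)
  | S n' => fun F => nsum (fun z => sumvec n' (fun v => F (Vector.cons nat z n' v)))
  end.

Fixpoint prodfin (n : nat) : (Fin.t n -> R) -> R :=
  match n with
  | O => fun _ => 1
  | S n' => fun a => a Fin.F1 * prodfin n' (fun i => a (Fin.FS i))
  end.

Fixpoint prodlt (y : nat) (a : nat -> R) : R :=
  match y with
  | O => 1
  | S y' => prodlt y' a * a y'
  end.

Definition zeroPF : PF 1 := fun _ y => if Nat.eqb y 0 then 1 else 0.
Definition succPF : PF 1 := fun v y => if Nat.eqb y (S (Vector.hd v)) then 1 else 0.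
Definition projPF (n : nat) (m : Fin.t n) : PF n :=
  fun v y => if Nat.eqb y (Vector.nth v m) then 1 else 0.
Definition randPF : PF 1 :=
  fun v y => if Nat.eqb y (Vector.hd v) then /2
             else if Nat.eqb y (S (Vector.hd v)) then /2 else 0.

Definition compPF {n k : nat} (f : PF n) (g : Fin.t n -> PF k) : PF k :=
  fun x y => sumvec n (fun zs => f zs y * prodfin n (fun i => g i x (Vector.nth zs i))).

Definition muPF {k : nat} (f : PF (S k)) : PF k :=
  fun x y => f (Vector.shiftin y x) 0%nat *
             prodlt y (fun z => nsum (fun j => f (Vector.shiftin z x) (S j))).

(** The class PR: smallest class containing the basic PFs, closed under
    composition, primitive recursion (h = rec(f,g), given by its defining
    equations) and minimization. *)
Inductive PR : forall k : nat, PF k -> Prop :=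
| PR_zero : PR 1 zeroPF
| PR_succ : PR 1 succPF
| PR_proj : forall (n : nat) (m : Fin.t n), PR n (projPF n m)
| PR_rand : PR 1 randPF
| PR_comp : forall (n k : nat) (f : PF n) (g : Fin.t n -> PF k),
    PR n f -> (forall i, PR k (g i)) -> PR k (compPF f g)
| PR_rec : forall (k : nat) (f : PF k) (g : PF (S (S k))) (h : PF (S k)),
    PR k f -> PR (S (S k)) g ->
    (forall x w, h (Vector.shiftin 0%nat x) w = f x w) ->
    (forall x y w, h (Vector.shiftin (S y) x) w =
        nsum (fun z => h (Vector.shiftin y x) z *
                       g (Vector.shiftin z (Vector.shiftin y x)) w)) ->
    PR (S k) h
| PR_mu : forall (k : nat) (f : PF (S k)), PR (S k) f -> PR k (muPF f).

Inductive Move : Type := MLeft | MRight.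

Record PTM : Type := {
  Sig : Type;
  St : Type;
  Sig_finite : FinFun.Finite Sig;
  St_finite : FinFun.Finite St;
  sym0 : Sig; sym1 : Sig; blank : Sig;
  syms_distinct : sym0 <> sym1 /\ sym0 <> blank /\ sym1 <> blank;
  qstart : St;
  final : St -> bool;
  delta : bool -> St -> Sig -> St * Sig * Move  (* δ_0, δ_1 *)
}.

(* configuration <s, a, t, q>: s = tape left of the head (left-to-right),
   a = scanned symbol, t = tape right of the head, q = state *)
Record config (M : PTM) : Type := mkConfig {
  cleft : list (Sig M); chead : Sig M; cright : list (Sig M); cstate : St M }.
Arguments mkConfig {M}. Arguments cleft {M}. Arguments chead {M}.
Arguments cright {M}. Arguments cstate {M}.

Definition step (M : PTM) (c : config M) (b : bool) : config M :=
  match delta M b (cstate c) (chead c) with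
  | (q', a', MRight) =>
      mkConfig (cleft c ++ [a']) (hd (blank M) (cright c)) (tl (cright c)) q'
  | (q', a', MLeft) =>
      mkConfig (removelast (cleft c)) (last (cleft c) (blank M)) (a' :: cright c) q'
  end.

Definition run (M : PTM) (bs : list bool) (c : config M) : config M :=
  fold_left (step M) bs c.

Definition bits_to_sig (M : PTM) (w : list bool) : list (Sig M) :=
  map (fun b : bool => if b then sym1 M else sym0 M) w.

Definition init (M : PTM) (w : list bool) : config M :=
  match bits_to_sig M w with
  | nil => mkConfig nil (blank M) nil (qstart M)
  | a :: v => mkConfig nil a v (qstart M)
  end.

Definition halts_with (M : PTM) (w : list bool) (bs : list bool) (out : list bool) : Prop :=
  (forall j, (j < length bs)%nat -> final M (cstate (run M (firstn j bs) (init M w))) = false) /\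
  final M (cstate (run M bs (init M w))) = true /\
  cleft (run M bs (init M w)) = bits_to_sig M out /\
  cright (run M bs (init M w)) = [].

Fixpoint bitlists (n : nat) : list (list bool) :=
  match n with
  | O => [[]]
  | S n' => flat_map (fun l => [false :: l; true :: l]) (bitlists n')
  end.

Definition IO (M : PTM) (w out : list bool) : R :=
  nsum (fun n => fold_right Rplus 0
    (map (fun bs => if excluded_middle_informative (halts_with M w bs out)
                    then (/2) ^ n else 0) (bitlists n))).

(** Length-lexicographic bijection N -> {0,1}^*: n ↦ binary of n+1 without its
    leading 1 (0 ↦ ε, 1 ↦ 0, 2 ↦ 1, 3 ↦ 00, ...). *)
Fixpoint pos_bits (p : positive) : list bool :=
  match p with
  | xH => []
  | xO p' => pos_bits p' ++ [false]
  | xI p' => pos_bits p' ++ [true]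
  end.
Definition nbar (n : nat) : list bool := pos_bits (Pos.of_succ_nat n).

Definition enc_tuple {k : nat} (x : Vector.t nat k) : list bool :=
  Vector.fold_right (fun n acc => flat_map (fun b => [b; b]) (nbar n) ++ [false; true] ++ acc) x [].

Definition PC (k : nat) (f : PF k) : Prop :=
  exists M : PTM, forall x y, f x y = IO M (enc_tuple x) (nbar y).

(* Main.v *)
Require Import Defs.
From Stdlib Require Import Reals.
From Stdlib Require Import PArith List Lia Lra Arith FunctionalExtensionality ClassicalEpsilon FinFun.
From Stdlib Require Vector Fin.
Import ListNotations.

Module P1.
Local Open Scope R_scope.

Lemma nsum_spec (f : nat -> R) (l : R) : infinite_sum f l -> nsum f = l.
Proof.
  intro H. unfold nsum.
  assert (E : exists l, infinite_sum f l) by (exists l; exact H).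
  pose proof (epsilon_spec (inhabits 0%R) (fun l => infinite_sum f l) E) as H2.
  simpl in H2. eapply uniqueness_sum; eauto.
Qed.

Lemma infinite_sum_cv (f : nat -> R) (l : R) :
  Un_cv (fun N => sum_f_R0 f N) l -> infinite_sum f l.
Proof. intros H eps Heps. destruct (H eps Heps) as [N HN]. exists N. exact HN. Qed.

Lemma cv_infinite_sum (f : nat -> R) (l : R) :
  infinite_sum f l -> Un_cv (fun N => sum_f_R0 f N) l.
Proof. intros H eps Heps. destruct (H eps Heps) as [N HN]. exists N. exact HN. Qed.

Lemma infinite_sum_finite (f : nat -> R) (N : nat) :
  (forall n, (n > N)%nat -> f n = 0) -> infinite_sum f (sum_f_R0 f N).
Proof.
  intros H eps Heps. exists N. intros n Hn.
  assert (E : sum_f_R0 f n = sum_f_R0 f N).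
  { induction Hn. reflexivity. simpl. rewrite IHHn, H by lia. ring. }
  rewrite E. unfold R_dist. rewrite Rminus_diag, Rabs_R0. exact Heps.
Qed.

Lemma nsum_single (a : nat) (c : R) :
  nsum (fun n => if Nat.eqb n a then c else 0) = c.
Proof.
  apply nsum_spec.
  assert (Hm : forall m, (m < a)%nat -> sum_f_R0 (fun n => if Nat.eqb n a then c else 0) m = 0).
  { induction m; intros.
    - simpl. destruct a; [lia|reflexivity].
    - rewrite tech5, IHm by lia. cbv beta. replace (Nat.eqb (S m) a) with false; [ring|]. symmetry; apply Nat.eqb_neq; lia. }
  assert (Ha : sum_f_R0 (fun n => if Nat.eqb n a then c else 0) a = c).
  { destruct a. simpl. reflexivity.
    rewrite tech5, Hm by lia. rewrite Nat.eqb_refl. ring. }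
  pattern c at 2; rewrite <- Ha.
  apply infinite_sum_finite. intros n Hn. destruct (Nat.eqb_spec n a); [lia|auto].
Qed.

Lemma nsum_zero : nsum (fun _ => 0) = 0.
Proof.
  apply nsum_spec. intros eps He. exists 0%nat. intros n _.
  assert (E : sum_f_R0 (fun _ : nat => 0) n = 0) by (induction n; simpl; [|rewrite IHn]; ring).
  rewrite E. unfold R_dist. rewrite Rminus_diag, Rabs_R0. exact He.
Qed.

Lemma to_list_shiftin (k : nat) (x : Vector.t nat k) (y : nat) :
  Vector.to_list (Vector.shiftin y x) = Vector.to_list x ++ [y].
Proof.
  induction x. reflexivity.
  change (Vector.shiftin y (Vector.cons nat h n x)) with (Vector.cons nat h (S n) (Vector.shiftin y x)).
  rewrite !VectorSpec.to_list_cons, IHx. reflexivity.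
Qed.

Lemma vec_shiftin_decomp (k : nat) (v : Vector.t nat (S k)) :
  exists x y, v = Vector.shiftin y x.
Proof.
  induction k.
  - exists (Vector.nil nat), (Vector.hd v).
    apply (Vector.caseS' v). intros h t. revert t. apply (@Vector.case0 nat). reflexivity.
  - apply (Vector.caseS' v). intros h t. destruct (IHk t) as [x [y ->]].
    exists (Vector.cons nat h k x), y. reflexivity.
Qed.

Fixpoint vec_of (n : nat) : (Fin.t n -> nat) -> Vector.t nat n :=
  match n with
  | O => fun _ => Vector.nil nat
  | S n' => fun a => Vector.cons nat (a Fin.F1) n' (vec_of n' (fun i => a (Fin.FS i)))
  end.

Lemma nth_vec_of (n : nat) (a : Fin.t n -> nat) (i : Fin.t n) : Vector.nth (vec_of n a) i = a i.
Proof.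
  induction n. inversion i.
  apply (Fin.caseS' i); simpl. reflexivity. intro p. apply IHn.
Qed.

Lemma sumvec_dirac (n : nat) (H : Vector.t nat n -> R) (a : Fin.t n -> nat) :
  sumvec n (fun zs => H zs * prodfin n (fun i => if Nat.eqb (Vector.nth zs i) (a i) then 1 else 0))
  = H (vec_of n a).
Proof.
  revert H a. induction n; intros H a; simpl.
  - ring.
  - transitivity (nsum (fun z => if Nat.eqb z (a Fin.F1) then H (Vector.cons nat (a Fin.F1) n (vec_of n (fun i => a (Fin.FS i)))) else 0)).
    2: apply nsum_single.
    f_equal. apply functional_extensionality. intro z.
    pose proof (IHn (fun v => H (Vector.cons nat z n v) * (if Nat.eqb z (a Fin.F1) then 1 else 0)) (fun i => a (Fin.FS i))) as E.
    simpl in E.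
    transitivity (H (Vector.cons nat z n (vec_of n (fun i => a (Fin.FS i)))) * (if Nat.eqb z (a Fin.F1) then 1 else 0)).
    + rewrite <- E. f_equal. apply functional_extensionality. intro v. ring.
    + destruct (Nat.eqb_spec z (a Fin.F1)). subst. ring. ring.
Qed.

End P1.
Import P1.

Module P2.
Local Open Scope R_scope.

Definition dirac {k : nat} (F : Vector.t nat k -> nat) : PF k :=
  fun x y => if Nat.eqb y (F x) then 1 else 0.

Definition DL (k : nat) (F : list nat -> nat) : Prop :=
  PR k (dirac (fun x => F (Vector.to_list x))).

Lemma DL_ext (k : nat) (F G : list nat -> nat) :
  (forall l, length l = k -> F l = G l) -> DL k F -> DL k G.
Proof.
  unfold DL. intros E H.
  replace (dirac (fun x : Vector.t nat k => G (Vector.to_list x)))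
    with (dirac (fun x : Vector.t nat k => F (Vector.to_list x))); auto.
  unfold dirac. apply functional_extensionality; intro x.
  rewrite E; auto. apply VectorSpec.length_to_list.
Qed.

Lemma DL_zero (k : nat) : DL k (fun _ => 0%nat).
Proof.
  unfold DL.
  assert (E : dirac (fun _ : Vector.t nat k => 0%nat) =
              compPF (n:=0) (muPF zeroPF) (fun i => Fin.case0 (fun _ => PF k) i)).
  { unfold dirac, compPF, muPF. apply functional_extensionality; intro x.
    apply functional_extensionality; intro y. simpl.
    unfold zeroPF. simpl.
    assert (E0 : nsum (fun j : nat => if Nat.eqb (S j) 0 then 1 else 0) = 0).
    { transitivity (nsum (fun _ : nat => 0)). reflexivity. apply nsum_zero. }
    assert (E1 : forall y (a : nat -> R), (forall z, a z = 0) -> prodlt y a = if Nat.eqb y 0 then 1 else 0).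
    { intros y0 a Ha. induction y0. reflexivity. simpl. rewrite IHy0, Ha. destruct y0; simpl; ring. }
    rewrite E1 by (intro; exact E0). destruct y; simpl; ring. }
  rewrite E. apply PR_comp. apply PR_mu. apply PR_zero. intro i. inversion i.
Qed.


Lemma to_list_vec_of (m : nat) (G : nat -> nat) :
  Vector.to_list (vec_of m (fun i => G (proj1_sig (Fin.to_nat i)))) = map G (seq 0 m).
Proof.
  revert G. induction m; intro G. reflexivity.
  simpl vec_of. rewrite VectorSpec.to_list_cons.
  transitivity (G 0%nat :: Vector.to_list (vec_of m (fun i => (fun j => G (S j)) (proj1_sig (Fin.to_nat i))))).
  { do 3 f_equal. apply functional_extensionality; intro i. destruct (Fin.to_nat i). reflexivity. }
  rewrite (IHm (fun j => G (S j))). simpl. f_equal. rewrite <- seq_shift, map_map. reflexivity.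
Qed.
Lemma DL_comp (m k : nat) (Op : list nat -> nat) (Fi : nat -> list nat -> nat) :
  DL m Op -> (forall i, (i < m)%nat -> DL k (Fi i)) ->
  DL k (fun l => Op (map (fun i => Fi i l) (seq 0 m))).
Proof.
  intros HO HF. unfold DL in *.
  set (g := fun i : Fin.t m => dirac (fun x : Vector.t nat k => Fi (proj1_sig (Fin.to_nat i)) (Vector.to_list x))).
  assert (E : dirac (fun x : Vector.t nat k => Op (map (fun i => Fi i (Vector.to_list x)) (seq 0 m)))
              = compPF (dirac (fun x : Vector.t nat m => Op (Vector.to_list x))) g).
  { apply functional_extensionality; intro x. apply functional_extensionality; intro y.
    symmetry. unfold compPF, g, dirac.
    rewrite (sumvec_dirac m (fun zs => if Nat.eqb y (Op (Vector.to_list zs)) then 1 else 0)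
      (fun i => Fi (proj1_sig (Fin.to_nat i)) (Vector.to_list x))).
    rewrite (to_list_vec_of m (fun i => Fi i (Vector.to_list x))). reflexivity. }
  rewrite E. apply PR_comp. exact HO.
  intro i. unfold g. apply HF. destruct (Fin.to_nat i). simpl. exact l.
Qed.

Lemma DL_var (k i : nat) : DL k (fun l => nth i l 0%nat).
Proof.
  destruct (Nat.lt_ge_cases i k) as [H|H].
  - unfold DL.
    replace (dirac (fun x : Vector.t nat k => nth i (Vector.to_list x) 0%nat)) with (projPF k (Fin.of_nat_lt H)).
    apply PR_proj.
    unfold projPF, dirac. apply functional_extensionality; intro x. apply functional_extensionality; intro y.
    rewrite <- (VectorSpec.to_list_nth_order _ _ x i H). reflexivity.
  - eapply DL_ext. 2: apply DL_zero. intros l Hl. simpl. rewrite nth_overflow by lia. reflexivity.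
Qed.

Lemma map_nth_seq_id (l : list nat) : map (fun i => nth i l 0%nat) (seq 0 (length l)) = l.
Proof.
  induction l. reflexivity. simpl. f_equal. rewrite <- seq_shift, map_map. exact IHl.
Qed.

Lemma DL_succ (k : nat) (F : list nat -> nat) : DL k F -> DL k (fun l => S (F l)).
Proof.
  intro H.
  assert (H1 : DL 1 (fun l => S (nth 0 l 0%nat))).
  { unfold DL. replace (dirac (fun x : Vector.t nat 1 => S (nth 0 (Vector.to_list x) 0%nat))) with succPF.
    apply PR_succ. unfold succPF, dirac. apply functional_extensionality; intro x.
    apply functional_extensionality; intro y. rewrite (VectorSpec.to_list_hd _ _ x 0%nat).
    destruct (Vector.to_list x); reflexivity. }
  pose proof (DL_comp 1 k _ (fun _ => F) H1) as H2.
  apply H2. intros. exact H.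
Qed.

Lemma DL_const (k c : nat) : DL k (fun _ => c).
Proof. induction c. apply DL_zero. apply (DL_succ k (fun _ => c)). exact IHc. Qed.

Fixpoint primrec (b : nat) (s : nat -> nat -> nat) (n : nat) : nat :=
  match n with O => b | S y => s y (primrec b s y) end.

Lemma firstn_app_len (l l' : list nat) (k : nat) : length l = k -> firstn k (l ++ l') = l.
Proof. intro H. subst. rewrite firstn_app, Nat.sub_diag, firstn_all. simpl. apply app_nil_r. Qed.

Lemma DL_rec (k : nat) (B : list nat -> nat) (St : list nat -> nat) (N : list nat -> nat) :
  DL k B -> DL (S (S k)) St -> DL k N ->
  DL k (fun l => primrec (B l) (fun y h => St (l ++ [y; h])) (N l)).
Proof.
  intros HB HS HN.
  set (Rf := fun l => primrec (B (firstn k l)) (fun y h => St (firstn k l ++ [y; h])) (last l 0%nat)).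
  assert (HR : DL (S k) Rf).
  { unfold DL. eapply (PR_rec k _ _ _ HB HS).
    - intros x w. unfold dirac, Rf. rewrite (to_list_shiftin k x 0%nat). rewrite firstn_app_len by apply VectorSpec.length_to_list.
      rewrite last_last. reflexivity.
    - intros x y w. unfold dirac at 1.
      transitivity (nsum (fun z => if Nat.eqb z (Rf (Vector.to_list (Vector.shiftin y x)))
           then dirac (fun x0 : Vector.t nat (S (S k)) => St (Vector.to_list x0))
             (Vector.shiftin (Rf (Vector.to_list (Vector.shiftin y x))) (Vector.shiftin y x)) w else 0)).
      + rewrite nsum_single. unfold dirac, Rf. rewrite ?to_list_shiftin.
        rewrite <- app_assoc. simpl app.
        rewrite ?firstn_app_len by apply VectorSpec.length_to_list.
        rewrite ?last_last. reflexivity.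
      + f_equal. apply functional_extensionality; intro z. unfold dirac.
        destruct (Nat.eqb_spec z (Rf (Vector.to_list (Vector.shiftin y x)))). subst. ring. ring. }
  pose proof (DL_comp (S k) k Rf (fun i l => if Nat.ltb i k then nth i l 0%nat else N l) HR) as H.
  eapply DL_ext. 2: apply H.
  - intros l Hl. unfold Rf. rewrite seq_S, map_app. simpl. rewrite Nat.ltb_irrefl.
    replace (map (fun i => if Nat.ltb i k then nth i l 0%nat else N l) (seq 0 k))
      with (map (fun i => nth i l 0%nat) (seq 0 k)).
    2:{ apply map_ext_in. intros a Ha. apply in_seq in Ha. replace (Nat.ltb a k) with true. reflexivity.
        symmetry. apply Nat.ltb_lt. lia. }
    rewrite <- Hl, map_nth_seq_id. rewrite firstn_app_len by reflexivity. rewrite last_last. reflexivity.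
  - intros i Hi. destruct (Nat.lt_ge_cases i k).
    + eapply DL_ext. 2: apply (DL_var k i). intros. apply Nat.ltb_lt in H0. rewrite H0. reflexivity.
    + eapply DL_ext. 2: exact HN. intros. replace (Nat.ltb i k) with false. reflexivity.
      symmetry. apply Nat.ltb_ge. lia.
Qed.

End P2.
Import P2.

Module P3.
Local Open Scope nat_scope.

Lemma DL_comp_list (m k : nat) (Op : list nat -> nat) (Fs : list (list nat -> nat)) :
  length Fs = m -> DL m Op -> (forall F, In F Fs -> DL k F) ->
  DL k (fun l => Op (map (fun F => F l) Fs)).
Proof.
  intros Hl HO HF.
  pose proof (DL_comp m k Op (fun i l => nth i Fs (fun _ => 0) l) HO) as H.
  eapply DL_ext. 2: apply H.
  - intros l _. cbv beta. f_equal. subst m. clear HF HO H. induction Fs as [|a Fs IH]. reflexivity.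
    simpl. f_equal. rewrite <- seq_shift, map_map. exact IH.
  - intros i Hi. apply HF. apply nth_In. lia.
Qed.

Lemma DL_op1 k (f : nat -> nat) F :
  DL 1 (fun l => f (nth 0 l 0)) -> DL k F -> DL k (fun l => f (F l)).
Proof.
  intros Hf HF. eapply DL_ext. 2: apply (DL_comp_list 1 k _ [F] eq_refl Hf). reflexivity. intros G [<-|[]]; auto.
Qed.

Lemma DL_op2 k (f : nat -> nat -> nat) F G :
  DL 2 (fun l => f (nth 0 l 0) (nth 1 l 0)) -> DL k F -> DL k G -> DL k (fun l => f (F l) (G l)).
Proof.
  intros Hf HF HG. eapply DL_ext. 2: apply (DL_comp_list 2 k _ [F; G] eq_refl Hf). reflexivity. intros H [<-|[<-|[]]]; auto.
Qed.

Lemma DL_op3 k (f : nat -> nat -> nat -> nat) F G H :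
  DL 3 (fun l => f (nth 0 l 0) (nth 1 l 0) (nth 2 l 0)) -> DL k F -> DL k G -> DL k H ->
  DL k (fun l => f (F l) (G l) (H l)).
Proof.
  intros Hf HF HG HH. eapply DL_ext. 2: apply (DL_comp_list 3 k _ [F; G; H] eq_refl Hf). reflexivity. intros I [<-|[<-|[<-|[]]]]; auto.
Qed.

Lemma map_nth_seq_firstn (k : nat) (l : list nat) :
  k <= length l -> map (fun i => nth i l 0) (seq 0 k) = firstn k l.
Proof.
  revert l. induction k; intros l H. reflexivity.
  destruct l as [|a l]; simpl in H. lia.
  simpl. f_equal. rewrite <- seq_shift, map_map. apply IHk. lia.
Qed.

Lemma DL_weaken k m F : k <= m -> DL k F -> DL m (fun l => F (firstn k l)).
Proof.
  intros Hkm HF.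
  pose proof (DL_comp k m F (fun i l => nth i l 0) HF (fun i _ => DL_var m i)) as H.
  eapply DL_ext. 2: exact H. intros l Hl. cbv beta. f_equal.
  apply map_nth_seq_firstn. lia.
Qed.

Lemma DL_rec' k (B N : list nat -> nat) (s : list nat -> nat -> nat -> nat) :
  DL k B -> DL k N -> DL (S (S k)) (fun l => s (firstn k l) (nth k l 0) (nth (S k) l 0)) ->
  DL k (fun l => primrec (B l) (s l) (N l)).
Proof.
  intros HB HN HS.
  pose proof (DL_rec k B _ N HB HS HN) as H.
  eapply DL_ext. 2: exact H. intros l Hl. simpl.
  f_equal. apply functional_extensionality; intro y. apply functional_extensionality; intro h.
  rewrite firstn_app_len by auto. rewrite app_nth2 by lia. rewrite Hl, Nat.sub_diag. simpl.
  rewrite app_nth2 by lia. replace (S k - length l) with 1 by lia. reflexivity.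
Qed.

Lemma DL_iter k (S0 N : list nat -> nat) (st : list nat -> nat -> nat) :
  DL k S0 -> DL k N -> DL (S k) (fun l => st (firstn k l) (nth k l 0)) ->
  DL k (fun l => Nat.iter (N l) (st l) (S0 l)).
Proof.
  intros H0 HN HS.
  assert (E : forall l n, Nat.iter n (st l) (S0 l) = primrec (S0 l) (fun _ h => st l h) n).
  { intros l n. induction n; simpl; congruence. }
  eapply DL_ext. intros; symmetry; apply E.
  apply DL_rec'; auto.
  pose proof (DL_comp (S k) (S (S k)) (fun l => st (firstn k l) (nth k l 0))
     (fun i l => if i <? k then nth i l 0 else nth (S k) l 0) HS) as H.
  eapply DL_ext. 2: apply H.
  - intros l Hl. cbv beta. rewrite seq_S, map_app. simpl map at 2. rewrite Nat.ltb_irrefl.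
    rewrite firstn_app_len. 2: rewrite length_map, length_seq; auto.
    rewrite app_nth2; rewrite length_map, length_seq; auto. rewrite Nat.sub_diag. simpl nth at 2.
    f_equal. rewrite <- map_nth_seq_firstn by lia.
    apply map_ext_in. intros a Ha. apply in_seq in Ha.
    replace (a <? k) with true by (symmetry; apply Nat.ltb_lt; lia). reflexivity.
    simpl. rewrite Nat.ltb_irrefl. reflexivity.
  - intros i Hi. destruct (i <? k); apply DL_var.
Qed.

Lemma DL_add k F G : DL k F -> DL k G -> DL k (fun l => F l + G l).
Proof.
  intros HF HG. apply (DL_op2 k Nat.add); auto.
  assert (E : forall a b, a + b = primrec a (fun _ h => S h) b).
  { intros a b. induction b; simpl; lia. }
  eapply DL_ext. intros. symmetry. apply E.
  apply (DL_rec' 2 (fun l => nth 0 l 0) (fun l => nth 1 l 0) (fun _ _ h => S h)).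
  apply DL_var. apply DL_var. apply DL_succ. apply DL_var.
Qed.

Lemma DL_mul k F G : DL k F -> DL k G -> DL k (fun l => F l * G l).
Proof.
  intros HF HG. apply (DL_op2 k Nat.mul); auto.
  assert (E : forall a b, a * b = primrec 0 (fun _ h => h + a) b).
  { intros a b. induction b; simpl; lia. }
  eapply DL_ext. intros. symmetry. apply E.
  apply (DL_rec' 2 (fun l => 0) (fun l => nth 1 l 0) (fun l _ h => h + nth 0 l 0)).
  apply DL_const. apply DL_var. apply DL_add. apply DL_var.
  eapply DL_ext. 2: apply (DL_var 4 0). intros l Hl. destruct l as [|a l]; simpl in *; [lia|].
  destruct l as [|b l]; simpl in *. lia. destruct l; simpl in *; lia.
Qed.

Lemma DL_pred k F : DL k F -> DL k (fun l => pred (F l)).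
Proof.
  intros HF. apply (DL_op1 k pred); auto.
  assert (E : forall a, pred a = primrec 0 (fun y _ => y) a).
  { intros a. destruct a; reflexivity. }
  eapply DL_ext. intros. symmetry. apply E.
  apply (DL_rec' 1 (fun l => 0) (fun l => nth 0 l 0) (fun _ y _ => y)).
  apply DL_const. apply DL_var. apply DL_var.
Qed.

Lemma DL_sub k F G : DL k F -> DL k G -> DL k (fun l => F l - G l).
Proof.
  intros HF HG. apply (DL_op2 k Nat.sub); auto.
  assert (E : forall a b, a - b = primrec a (fun _ h => pred h) b).
  { intros a b. induction b; simpl; lia. }
  eapply DL_ext. intros. symmetry. apply E.
  apply (DL_rec' 2 (fun l => nth 0 l 0) (fun l => nth 1 l 0) (fun _ _ h => pred h)).
  apply DL_var. apply DL_var. apply DL_pred. apply DL_var.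
Qed.

Definition ifz (c a b : nat) : nat := match c with O => a | S _ => b end.

Lemma DL_ifz k C A B : DL k C -> DL k A -> DL k B -> DL k (fun l => ifz (C l) (A l) (B l)).
Proof.
  intros HC HA HB. apply (DL_op3 k ifz); auto.
  assert (E : forall c a b, ifz c a b = primrec a (fun _ _ => b) c).
  { intros c a b. destruct c; reflexivity. }
  eapply DL_ext. intros. symmetry. apply E.
  apply (DL_rec' 3 (fun l => nth 1 l 0) (fun l => nth 0 l 0) (fun l _ _ => nth 2 l 0)).
  apply DL_var. apply DL_var.
  eapply DL_ext. 2: apply (DL_var 5 2). intros l Hl. do 3 (destruct l as [|? l]; simpl in *; [lia|]). reflexivity.
Qed.

Lemma DL_if_leb k A B X Y : DL k A -> DL k B -> DL k X -> DL k Y ->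
  DL k (fun l => if A l <=? B l then X l else Y l).
Proof.
  intros. eapply DL_ext. 2: apply (DL_ifz k (fun l => A l - B l) X Y); [apply DL_sub| |]; eauto.
  intros l _. simpl. destruct (Nat.leb_spec (A l) (B l)).
  replace (A l - B l) with 0 by lia. reflexivity.
  destruct (A l - B l) eqn:E; [lia|reflexivity].
Qed.

Lemma DL_if_eqb k A B X Y : DL k A -> DL k B -> DL k X -> DL k Y ->
  DL k (fun l => if A l =? B l then X l else Y l).
Proof.
  intros. eapply DL_ext. 2: apply (DL_ifz k (fun l => (A l - B l) + (B l - A l)) X Y); [apply DL_add; apply DL_sub| |]; eauto.
  intros l _. simpl. destruct (Nat.eqb_spec (A l) (B l)).
  rewrite e. rewrite Nat.sub_diag. reflexivity.
  destruct (A l - B l + (B l - A l)) eqn:E; [lia|reflexivity].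
Qed.

Lemma DL_mod2 k F : DL k F -> DL k (fun l => F l mod 2).
Proof.
  intros HF. apply (DL_op1 k (fun a => a mod 2)); auto.
  assert (E : forall a, a mod 2 = primrec 0 (fun _ h => 1 - h) a).
  { intros a. induction a. reflexivity.
    change (primrec 0 (fun _ h => 1 - h) (S a)) with (1 - primrec 0 (fun _ h => 1 - h) a).
    rewrite <- IHa. pose proof (Nat.div_mod_eq a 2). pose proof (Nat.div_mod_eq (S a) 2).
    pose proof (Nat.mod_upper_bound a 2). pose proof (Nat.mod_upper_bound (S a) 2). lia. }
  eapply DL_ext. intros. symmetry. apply E.
  apply (DL_rec' 1 (fun l => 0) (fun l => nth 0 l 0) (fun _ _ h => 1 - h)).
  apply DL_const. apply DL_var. apply DL_sub. apply DL_const. apply DL_var.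
Qed.

Lemma DL_div2 k F : DL k F -> DL k (fun l => F l / 2).
Proof.
  intros HF. apply (DL_op1 k (fun a => a / 2)); auto.
  assert (E : forall a, a / 2 = primrec 0 (fun y h => h + y mod 2) a).
  { intros a. induction a. reflexivity.
    change (primrec 0 (fun y h => h + y mod 2) (S a)) with (primrec 0 (fun y h => h + y mod 2) a + a mod 2).
    rewrite <- IHa.
    pose proof (Nat.div_mod_eq a 2). pose proof (Nat.div_mod_eq (S a) 2).
    pose proof (Nat.mod_upper_bound a 2). pose proof (Nat.mod_upper_bound (S a) 2). lia. }
  eapply DL_ext. intros. symmetry. apply E.
  apply (DL_rec' 1 (fun l => 0) (fun l => nth 0 l 0) (fun _ y h => h + y mod 2)).
  apply DL_const. apply DL_var. apply DL_add. apply DL_var. apply DL_mod2. apply DL_var.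
Qed.

End P3.
Import P3.

Module P4.
Local Open Scope nat_scope.

Fixpoint bsum (n : nat) (f : nat -> nat) : nat :=
  match n with O => 0 | S m => bsum m f + f m end.

Lemma DL_bsum k (N : list nat -> nat) (f : list nat -> nat -> nat) :
  DL k N -> DL (S k) (fun l => f (firstn k l) (nth k l 0)) ->
  DL k (fun l => bsum (N l) (f l)).
Proof.
  intros HN Hf.
  assert (E : forall l n, bsum n (f l) = primrec 0 (fun y h => h + f l y) n).
  { intros l n. induction n; simpl; congruence. }
  eapply DL_ext. intros; symmetry; apply E.
  apply DL_rec'; auto. apply DL_const.
  apply DL_add. apply DL_var.
  pose proof (DL_weaken (S k) (S (S k)) _ ltac:(lia) Hf) as H.
  eapply DL_ext. 2: exact H. intros l Hl. cbv beta.
  rewrite firstn_firstn. replace (Nat.min k (S k)) with k by lia.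
  rewrite nth_firstn. replace (k <? S k) with true by (symmetry; apply Nat.ltb_lt; lia). reflexivity.
Qed.

Lemma DL_table k (T : nat -> nat) (N : nat) (F : list nat -> nat) :
  DL k F -> DL k (fun l => if F l <? N then T (F l) else 0).
Proof.
  intro HF. induction N.
  - eapply DL_ext. 2: apply DL_const. intros. simpl. destruct (F l); reflexivity.
  - eapply DL_ext. 2: apply (DL_if_eqb k F (fun _ => N) (fun _ => T N) _ HF (DL_const _ _) (DL_const _ _) IHN).
    intros l _. cbv beta. destruct (Nat.eqb_spec (F l) N).
    + rewrite e. replace (N <? S N) with true by (symmetry; apply Nat.ltb_lt; lia). reflexivity.
    + destruct (Nat.ltb_spec (F l) N); destruct (Nat.ltb_spec (F l) (S N)); try lia; reflexivity.
Qed.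

Fixpoint tri (s : nat) : nat := match s with O => 0 | S s' => tri s' + S s' end.

Lemma DL_tri k F : DL k F -> DL k (fun l => tri (F l)).
Proof.
  intro HF. apply (DL_op1 k tri); auto.
  assert (E : forall a, tri a = primrec 0 (fun y h => h + S y) a).
  { intros a. induction a; simpl; congruence. }
  eapply DL_ext. intros; symmetry; apply E.
  apply (DL_rec' 1 (fun _ => 0) (fun l => nth 0 l 0) (fun _ y h => h + S y)).
  apply DL_const. apply DL_var. apply DL_add. apply DL_var. apply DL_succ. apply DL_var.
Qed.

Definition cs (z : nat) : nat := primrec 0 (fun y h => if tri (S h) <=? S y then S h else h) z.

Lemma tri_mono a b : a <= b -> tri a <= tri b.
Proof. induction 1; simpl; lia. Qed.

Lemma tri_ge s : s <= tri s.
Proof. induction s; simpl; lia. Qed.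

Lemma cs_spec z : tri (cs z) <= z < tri (S (cs z)).
Proof.
  induction z. simpl. lia.
  change (cs (S z)) with (if tri (S (cs z)) <=? S z then S (cs z) else cs z).
  destruct (Nat.leb_spec (tri (S (cs z))) (S z)).
  - split. auto. change (tri (S (S (cs z)))) with (tri (S (cs z)) + S (S (cs z))). lia.
  - lia.
Qed.

Lemma cs_unique s z : tri s <= z < tri (S s) -> cs z = s.
Proof.
  intros H. pose proof (cs_spec z).
  destruct (Nat.lt_trichotomy (cs z) s) as [L|[L|L]]; auto.
  - pose proof (tri_mono (S (cs z)) s L). lia.
  - pose proof (tri_mono (S s) (cs z) L). lia.
Qed.

Definition cpair (a b : nat) : nat := tri (a + b) + b.
Definition csnd (z : nat) : nat := z - tri (cs z).
Definition cfst (z : nat) : nat := cs z - csnd z.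

Lemma cs_pair a b : cs (cpair a b) = a + b.
Proof. apply cs_unique. unfold cpair. simpl. lia. Qed.

Lemma csnd_pair a b : csnd (cpair a b) = b.
Proof. unfold csnd. rewrite cs_pair. unfold cpair. lia. Qed.

Lemma cfst_pair a b : cfst (cpair a b) = a.
Proof. unfold cfst. rewrite csnd_pair, cs_pair. lia. Qed.

Lemma cpair_surj z : cpair (cfst z) (csnd z) = z.
Proof.
  pose proof (cs_spec z). unfold cpair, cfst, csnd. simpl in H.
  replace (cs z - (z - tri (cs z)) + (z - tri (cs z))) with (cs z) by lia. lia.
Qed.

Lemma cpair_ge_snd a b : b <= cpair a b.
Proof. unfold cpair. lia. Qed.
Lemma cpair_ge_fst a b : a <= cpair a b.
Proof. unfold cpair. pose proof (tri_ge (a + b)). lia. Qed.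
Lemma cpair_lt_snd a b : b < S (cpair a b).
Proof. unfold cpair. lia. Qed.
Lemma cpair_mono a b a' b' : a <= a' -> b <= b' -> cpair a b <= cpair a' b'.
Proof. intros. unfold cpair. pose proof (tri_mono (a + b) (a' + b')). lia. Qed.
Lemma cfst_le z : cfst z <= z.
Proof. pose proof (cpair_surj z). pose proof (cpair_ge_fst (cfst z) (csnd z)). lia. Qed.
Lemma csnd_le z : csnd z <= z.
Proof. pose proof (cpair_surj z). pose proof (cpair_ge_snd (cfst z) (csnd z)). lia. Qed.

Lemma DL_cs k F : DL k F -> DL k (fun l => cs (F l)).
Proof.
  intro HF. apply (DL_op1 k cs); auto. unfold cs.
  apply (DL_rec' 1 (fun _ => 0) (fun l => nth 0 l 0) (fun _ y h => if tri (S h) <=? S y then S h else h)).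
  apply DL_const. apply DL_var.
  apply DL_if_leb. apply DL_tri, DL_succ, DL_var. apply DL_succ, DL_var. apply DL_succ, DL_var. apply DL_var.
Qed.

Lemma DL_csnd k F : DL k F -> DL k (fun l => csnd (F l)).
Proof. intro. unfold csnd. apply DL_sub; auto. apply DL_tri, DL_cs; auto. Qed.
Lemma DL_cfst k F : DL k F -> DL k (fun l => cfst (F l)).
Proof. intro. unfold cfst. apply DL_sub. apply DL_cs; auto. apply DL_csnd; auto. Qed.
Lemma DL_cpair k F G : DL k F -> DL k G -> DL k (fun l => cpair (F l) (G l)).
Proof. intros. unfold cpair. apply DL_add; auto. apply DL_tri, DL_add; auto. Qed.

Lemma DL_pow2 k F : DL k F -> DL k (fun l => 2 ^ (F l)).
Proof.
  intro HF. apply (DL_op1 k (fun a => 2 ^ a)); auto.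
  assert (E : forall a, 2 ^ a = primrec 1 (fun _ h => h + h) a).
  { intros a. induction a; simpl; lia. }
  eapply DL_ext. intros; symmetry; apply E.
  apply (DL_rec' 1 (fun _ => 1) (fun l => nth 0 l 0) (fun _ _ h => h + h)).
  apply DL_const. apply DL_var. apply DL_add; apply DL_var.
Qed.

End P4.
Import P4.

Module P5.
Local Open Scope nat_scope.

Fixpoint idx_in {A : Type} (l : list A) (a : A) : nat :=
  match l with
  | [] => 0
  | b :: l' => if excluded_middle_informative (a = b) then 0 else S (idx_in l' a)
  end.

Lemma idx_in_spec {A} (l : list A) a : In a l -> nth_error l (idx_in l a) = Some a /\ idx_in l a < length l.
Proof.
  induction l; simpl; intros H. contradiction.
  destruct (excluded_middle_informative (a = a0)). subst. simpl. split; auto; lia.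
  destruct H. congruence. destruct (IHl H). simpl. split; auto; lia.
Qed.

Definition finlist {A : Type} (H : Finite A) : list A :=
  proj1_sig (constructive_indefinite_description _ H).
Lemma finlist_full {A} (H : Finite A) (a : A) : In a (finlist H).
Proof. unfold finlist. destruct (constructive_indefinite_description _ H). simpl. apply f. Qed.

Ltac cp := repeat (rewrite cfst_pair || rewrite csnd_pair).

Section TM.
Variable M : PTM.

Definition lS : list (Sig M) := finlist (Sig_finite M).
Definition lQ : list (St M) := finlist (St_finite M).
Definition iS (a : Sig M) : nat := idx_in lS a.
Definition iQ (q : St M) : nat := idx_in lQ q.

Lemma iS_spec a : nth_error lS (iS a) = Some a /\ iS a < length lS.
Proof. apply idx_in_spec, finlist_full. Qed.
Lemma iQ_spec q : nth_error lQ (iQ q) = Some q /\ iQ q < length lQ.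
Proof. apply idx_in_spec, finlist_full. Qed.
Lemma iS_inj a b : iS a = iS b -> a = b.
Proof. intro H. pose proof (iS_spec a). pose proof (iS_spec b). rewrite H in H0. destruct H0, H1. congruence. Qed.

Fixpoint lcode (l : list (Sig M)) : nat :=
  match l with [] => 0 | a :: l' => S (cpair (iS a) (lcode l')) end.

Lemma lcode_inj l1 l2 : lcode l1 = lcode l2 -> l1 = l2.
Proof.
  revert l2. induction l1; destruct l2; simpl; intros H; try congruence.
  injection H as H. pose proof (f_equal cfst H). pose proof (f_equal csnd H).
  rewrite !cfst_pair in H0. rewrite !csnd_pair in H1. apply iS_inj in H0. f_equal; auto.
Qed.

Definition consC (a L : nat) : nat := S (cpair a L).
Definition hdC (d L : nat) : nat := ifz L d (cfst (pred L)).
Definition tlC (L : nat) : nat := csnd (pred L).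

Lemma hdC_spec l : hdC (iS (blank M)) (lcode l) = iS (hd (blank M) l).
Proof. destruct l; simpl; unfold hdC; simpl. reflexivity. apply cfst_pair. Qed.
Lemma tlC_spec l : tlC (lcode l) = lcode (tl l).
Proof. destruct l; simpl; unfold tlC; simpl. reflexivity. apply csnd_pair. Qed.

Definition cenc (c : config M) : nat :=
  cpair (lcode (rev (cleft c))) (cpair (iS (chead c)) (cpair (lcode (cright c)) (iQ (cstate c)))).

Definition mvn (m : Move) : nat := match m with MLeft => 0 | MRight => 1 end.

Definition dfun (i : nat) : nat :=
  match nth_error lS (cfst (csnd i)), nth_error lQ (csnd (csnd i)) with
  | Some sa, Some sq =>
      match delta M (cfst i =? 1) sq sa with
      | (q', a', mv) => cpair (mvn mv) (cpair (iS a') (iQ q'))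
      end
  | _, _ => 0
  end.

Definition NB : nat := S (cpair 1 (cpair (length lS) (length lQ))).
Definition dtab (i : nat) : nat := if i <? NB then dfun i else 0.

Definition stepC (C b : nat) : nat :=
  let L := cfst C in let a := cfst (csnd C) in let R := cfst (csnd (csnd C)) in
  let q := csnd (csnd (csnd C)) in
  let d := dtab (cpair b (cpair a q)) in
  let mv := cfst d in let a' := cfst (csnd d) in let q' := csnd (csnd d) in
  ifz mv (cpair (tlC L) (cpair (hdC (iS (blank M)) L) (cpair (consC a' R) q')))
         (cpair (consC a' L) (cpair (hdC (iS (blank M)) R) (cpair (tlC R) q'))).

Lemma rev_removelast {A} (l : list A) : rev (removelast l) = tl (rev l).
Proof.
  destruct l as [|a l] using rev_ind. reflexivity.
  rewrite removelast_last, rev_app_distr. reflexivity.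
Qed.
Lemma last_rev {A} (l : list A) d : last l d = hd d (rev l).
Proof.
  destruct l as [|a l] using rev_ind. reflexivity.
  rewrite last_last, rev_app_distr. reflexivity.
Qed.

Definition bn (b : bool) : nat := if b then 1 else 0.

Lemma stepC_spec c b : stepC (cenc c) (bn b) = cenc (step M c b).
Proof.
  destruct c as [L a R q]. unfold stepC, cenc. simpl cleft; simpl chead; simpl cright; simpl cstate.
  cp.
  unfold dtab. replace (cpair (bn b) (cpair (iS a) (iQ q)) <? NB) with true.
  2:{ symmetry. apply Nat.ltb_lt. unfold NB. apply Nat.lt_succ_r. apply cpair_mono.
      destruct b; simpl; lia. apply cpair_mono. apply Nat.lt_le_incl, iS_spec. apply Nat.lt_le_incl, iQ_spec. }
  unfold dfun. cp.
  destruct (iS_spec a) as [-> _]. destruct (iQ_spec q) as [-> _].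
  replace (bn b =? 1) with b by (destruct b; reflexivity).
  unfold step. simpl cstate; simpl chead.
  destruct (delta M b q a) as [[q' a'] mv]. cp.
  destruct mv; simpl ifz; simpl cleft; simpl cright; unfold cenc; simpl.
  - f_equal. rewrite rev_removelast, <- tlC_spec. reflexivity.
    f_equal. rewrite last_rev, hdC_spec. reflexivity.
  - f_equal. rewrite rev_app_distr. reflexivity.
    f_equal. rewrite hdC_spec. reflexivity. f_equal. rewrite tlC_spec. reflexivity.
Qed.

Definition fval (q : nat) : nat := match nth_error lQ q with Some s => if final M s then 1 else 0 | None => 0 end.
Definition ftab (q : nat) : nat := if q <? length lQ then fval q else 0.
Definition finalC (C : nat) : nat := ftab (csnd (csnd (csnd C))).

Lemma finalC_spec c : finalC (cenc c) = bn (final M (cstate c)).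
Proof.
  unfold finalC, cenc, ftab, fval. cp.
  destruct (iQ_spec (cstate c)) as [E Hl]. apply Nat.ltb_lt in Hl. rewrite Hl, E.
  destruct (final M (cstate c)); reflexivity.
Qed.

Definition halts_from (c : config M) (bs : list bool) (out : list bool) : Prop :=
  (forall j, j < length bs -> final M (cstate (run M (firstn j bs) c)) = false) /\
  final M (cstate (run M bs c)) = true /\
  cleft (run M bs c) = bits_to_sig M out /\ cright (run M bs c) = [].

Lemma halts_from_nil c out : halts_from c [] out <->
  final M (cstate c) = true /\ cleft c = bits_to_sig M out /\ cright c = [].
Proof.
  unfold halts_from. simpl. split. tauto. intros H. split; [intros; lia| tauto].
Qed.

Lemma halts_from_cons c b bs out : halts_from c (b :: bs) out <->
  final M (cstate c) = false /\ halts_from (step M c b) bs out.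
Proof.
  unfold halts_from. simpl. split.
  - intros [H1 H2]. split. apply (H1 0). lia. split; auto.
    intros j Hj. apply (H1 (S j)). lia.
  - intros [H0 [H1 H2]]. split; auto. intros [|j] Hj. exact H0. apply H1. lia.
Qed.

Fixpoint bl (t n : nat) : list bool :=
  match n with O => [] | S n' => (t mod 2 =? 1) :: bl (t / 2) n' end.

Definition Ey (y : nat) : nat := lcode (rev (bits_to_sig M (nbar y))).
Definition outC (C y : nat) : nat :=
  (if cfst C =? Ey y then 1 else 0) * (if cfst (csnd (csnd C)) =? 0 then 1 else 0).

Definition EMb (P : Prop) : nat := if excluded_middle_informative P then 1 else 0.

Lemma outC_spec c y : outC (cenc c) y = EMb (cleft c = bits_to_sig M (nbar y) /\ cright c = []).
Proof.
  unfold outC, cenc, EMb. cp. unfold Ey.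
  destruct (excluded_middle_informative _) as [[H1 H2]|H].
  - rewrite H1, H2, Nat.eqb_refl. reflexivity.
  - destruct (Nat.eqb_spec (lcode (rev (cleft c))) (lcode (rev (bits_to_sig M (nbar y))))) as [E|E]; [|reflexivity].
    apply lcode_inj in E. apply (f_equal (@rev _)) in E. rewrite !rev_involutive in E.
    destruct (cright c) eqn:R. exfalso; tauto. reflexivity.
Qed.

Definition chkStep (s : nat) : nat :=
  cpair (stepC (cfst s) (cfst (csnd s) mod 2))
        (cpair (cfst (csnd s) / 2) (csnd (csnd s) * (1 - finalC (cfst s)))).

Definition chkG (n y s : nat) : nat :=
  let s' := Nat.iter n chkStep s in csnd (csnd s') * finalC (cfst s') * outC (cfst s') y.

Lemma chk_spec n y : forall c t ok, ok <= 1 ->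
  chkG n y (cpair (cenc c) (cpair t ok)) = ok * EMb (halts_from c (bl t n) (nbar y)).
Proof.
  induction n; intros c t ok Hok.
  - unfold chkG. simpl Nat.iter. cp. rewrite finalC_spec, outC_spec. unfold EMb.
    destruct (excluded_middle_informative (halts_from c (bl t 0) (nbar y))) as [H|H];
    simpl in H; rewrite halts_from_nil in H.
    + destruct H as [H1 H2]. rewrite H1. destruct (excluded_middle_informative _); [|tauto]. simpl. lia.
    + destruct (final M (cstate c)) eqn:F; simpl; [|lia].
      destruct (excluded_middle_informative _); [tauto|]. lia.
  - unfold chkG. rewrite Nat.iter_succ_r. fold (chkG n y (chkStep (cpair (cenc c) (cpair t ok)))).
    unfold chkStep at 1. cp.
    replace (t mod 2) with (bn (t mod 2 =? 1)).
    2:{ pose proof (Nat.mod_upper_bound t 2). destruct (t mod 2) as [|[|]]; simpl; lia. }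
    rewrite stepC_spec, finalC_spec.
    rewrite IHn by (destruct (final M (cstate c)); simpl; lia).
    unfold EMb. change (bl t (S n)) with ((t mod 2 =? 1) :: bl (t/2) n).
    destruct (excluded_middle_informative (halts_from c ((t mod 2 =? 1) :: bl (t / 2) n) (nbar y))) as [H|H];
    rewrite halts_from_cons in H.
    + destruct H as [H1 H2]. rewrite H1. destruct (excluded_middle_informative _); [|tauto]. simpl. lia.
    + destruct (final M (cstate c)) eqn:F; simpl; [lia|].
      destruct (excluded_middle_informative _); [tauto|]. lia.
Qed.

Definition cnt (W n y : nat) : nat := bsum (2 ^ n) (fun t => chkG n y (cpair W (cpair t 1))).

End TM.

End P5.
Import P5.

Module P6.
Local Open Scope nat_scope.

Ltac dl1 := first
  [ apply DL_mod2 | apply DL_div2 | apply DL_table | apply DL_cpair | apply DL_cfst | apply DL_csnd | apply DL_add | apply DL_mul | apply DL_sub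
  | apply DL_pred | apply DL_ifz | apply DL_if_eqb | apply DL_if_leb | apply DL_mod2 | apply DL_div2
  | apply DL_pow2 | apply DL_tri | apply DL_succ | apply DL_var | apply DL_const ].
Ltac dl := repeat dl1.

Section TM2.
Variable M : PTM.

Lemma DL_stepC k F G : DL k F -> DL k G -> DL k (fun l => stepC M (F l) (G l)).
Proof.
  intros HF HG. unfold stepC, dtab, consC, hdC, tlC. cbv zeta. dl; auto.
Qed.

Lemma DL_finalC k F : DL k F -> DL k (fun l => finalC M (F l)).
Proof. intros. unfold finalC, ftab. dl; auto. Qed.

Definition symb (b : nat) : nat := if b =? 1 then iS M (sym1 M) else iS M (sym0 M).

Definition hstep (g : nat -> nat -> nat) (s : nat) : nat :=
  if cfst s <=? 1 then s else cpair (cfst s / 2) (g (cfst s mod 2) (csnd s)).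

Lemma iter_fix (f : nat -> nat) s n : f s = s -> Nat.iter n f s = s.
Proof. intro H. induction n. reflexivity. simpl. rewrite IHn. exact H. Qed.

Lemma hiter g : forall p fuel acc, Pos.to_nat p <= fuel ->
  csnd (Nat.iter fuel (hstep g) (cpair (Pos.to_nat p) acc)) =
  fold_right (fun b a => g (bn b) a) acc (pos_bits p).
Proof.
  induction p; intros fuel acc Hf.
  - rewrite Pos2Nat.inj_xI in *. destruct fuel as [|f]. lia.
    rewrite Nat.iter_succ_r. unfold hstep at 2. cp.
    replace (S (2 * Pos.to_nat p) <=? 1) with false by (pose proof (Pos2Nat.is_pos p); symmetry; apply Nat.leb_gt; lia).
    replace (S (2 * Pos.to_nat p) / 2) with (Pos.to_nat p) by (apply Nat.div_unique with 1; lia).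
    replace (S (2 * Pos.to_nat p) mod 2) with 1 by (apply Nat.mod_unique with (Pos.to_nat p); lia).
    rewrite IHp by lia. cp. simpl. rewrite fold_right_app. reflexivity.
  - rewrite Pos2Nat.inj_xO in *. destruct fuel as [|f]. pose proof (Pos2Nat.is_pos p). lia.
    rewrite Nat.iter_succ_r. unfold hstep at 2. cp.
    replace (2 * Pos.to_nat p <=? 1) with false by (pose proof (Pos2Nat.is_pos p); symmetry; apply Nat.leb_gt; lia).
    replace (2 * Pos.to_nat p / 2) with (Pos.to_nat p) by (apply Nat.div_unique with 0; lia).
    replace (2 * Pos.to_nat p mod 2) with 0 by (apply Nat.mod_unique with (Pos.to_nat p); lia).
    rewrite IHp by lia. cp. simpl. rewrite fold_right_app. reflexivity.
  - simpl. rewrite iter_fix. cp. reflexivity. unfold hstep. cp. reflexivity.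
Qed.

Lemma DL_hiter k g F N A :
  DL 2 (fun l => g (nth 0 l 0) (nth 1 l 0)) -> DL k F -> DL k N -> DL k A ->
  DL k (fun l => csnd (Nat.iter (N l) (hstep g) (cpair (F l) (A l)))).
Proof.
  intros Hg HF HN HA. apply DL_csnd. apply (DL_iter k (fun l => cpair (F l) (A l)) N (fun _ s => hstep g s)); auto.
  apply DL_cpair; auto. unfold hstep. apply DL_if_leb; [dl|dl|dl|].
  apply DL_cpair; [dl|]. apply (DL_op2 _ g (fun l => cfst (nth k l 0) mod 2) (fun l => csnd (nth k l 0))); [exact Hg|dl|dl].
Qed.

Fixpoint lapp (l : list (Sig M)) (acc : nat) : nat :=
  match l with [] => acc | a :: l' => consC (iS M a) (lapp l' acc) end.

Lemma lapp_lcode l1 l2 : lapp l1 (lcode M l2) = lcode M (l1 ++ l2).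
Proof. induction l1; simpl; unfold consC; congruence. Qed.

Lemma lapp_app l1 l2 acc : lapp (l1 ++ l2) acc = lapp l1 (lapp l2 acc).
Proof. induction l1; simpl; unfold consC; congruence. Qed.

Definition nbarcode (y : nat) : nat :=
  csnd (Nat.iter (S y) (hstep (fun b a => consC (symb b) a)) (cpair (S y) 0)).

Lemma symb_bn b : symb (bn b) = iS M (if b then sym1 M else sym0 M).
Proof. destruct b; reflexivity. Qed.

Lemma nbarcode_spec y : nbarcode y = lcode M (bits_to_sig M (nbar y)).
Proof.
  unfold nbarcode, nbar. replace (S y) with (Pos.to_nat (Pos.of_succ_nat y)) by apply SuccNat2Pos.id_succ.
  rewrite hiter by lia. unfold bits_to_sig. induction (pos_bits (Pos.of_succ_nat y)); simpl. reflexivity.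
  rewrite IHl, symb_bn. reflexivity.
Qed.

Definition rstep (s : nat) : nat :=
  ifz (cfst s) s (cpair (tlC (cfst s)) (consC (hdC 0 (cfst s)) (csnd s))).
Definition revC (L : nat) : nat := csnd (Nat.iter L rstep (cpair L 0)).

Lemma lcode_ge l : length l <= lcode M l.
Proof. induction l; simpl. lia. pose proof (cpair_ge_snd (iS M a) (lcode M l)). lia. Qed.

Lemma riter : forall l fuel acc, length l <= fuel ->
  csnd (Nat.iter fuel rstep (cpair (lcode M l) acc)) = lapp (rev l) acc.
Proof.
  induction l; intros fuel acc Hf.
  - simpl. rewrite iter_fix. cp. reflexivity. unfold rstep. cp. reflexivity.
  - destruct fuel as [|f]. simpl in Hf; lia.
    rewrite Nat.iter_succ_r. unfold rstep at 2. cp. simpl lcode. simpl ifz.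
    unfold tlC, hdC. simpl. cp. rewrite IHl by (simpl in Hf; lia).
    simpl. rewrite lapp_app. reflexivity.
Qed.

Lemma Ey_spec y : Ey M y = revC (nbarcode y).
Proof.
  unfold Ey, revC. rewrite nbarcode_spec. rewrite riter by apply lcode_ge.
  clear. induction (rev _); simpl. reflexivity. rewrite IHl. reflexivity.
Qed.

Lemma DL_Ey k F : DL k F -> DL k (fun l => Ey M (F l)).
Proof.
  intro HF. eapply DL_ext. intros; symmetry; apply Ey_spec.
  unfold revC. apply DL_csnd.
  apply (DL_iter k (fun l => cpair (nbarcode (F l)) 0) (fun l => nbarcode (F l)) (fun _ s => rstep s)).
  - apply DL_cpair. 2: dl. unfold nbarcode. apply DL_hiter; try (unfold consC; dl); dl; auto.
  - unfold nbarcode. apply DL_hiter; try (unfold consC; dl); dl; auto.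
  - unfold rstep, tlC, consC, hdC. dl.
Qed.

Lemma DL_outC k F G : DL k F -> DL k G -> DL k (fun l => outC M (F l) (G l)).
Proof. intros. unfold outC. apply DL_mul; apply DL_if_eqb; dl; auto. apply DL_Ey; auto. Qed.

Lemma DL_chkG k N Y S0 : DL k N -> DL k Y -> DL k S0 -> DL k (fun l => chkG M (N l) (Y l) (S0 l)).
Proof.
  intros HN HY HS. unfold chkG. cbv zeta.
  assert (HI : DL k (fun l => Nat.iter (N l) (chkStep M) (S0 l))).
  { apply (DL_iter k S0 N (fun _ s => chkStep M s)); [exact HS|exact HN|].
    unfold chkStep. apply DL_cpair. apply DL_stepC; dl. apply DL_cpair; [dl|]. apply DL_mul; [dl|].
    apply DL_sub; [dl|]. apply DL_finalC. dl. }
  apply DL_mul. apply DL_mul. dl; auto. apply DL_finalC; dl; auto. apply DL_outC; dl; auto.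
Qed.

Lemma DL_cnt k W N Y : DL k W -> DL k N -> DL k Y -> DL k (fun l => cnt M (W l) (N l) (Y l)).
Proof.
  intros HW HN HY. unfold cnt.
  apply (DL_bsum k (fun l => 2 ^ N l) (fun l t => chkG M (N l) (Y l) (cpair (W l) (cpair t 1)))).
  dl; auto.
  apply DL_chkG. apply DL_weaken; auto. apply DL_weaken; auto.
  apply DL_cpair. apply DL_weaken; auto. dl.
Qed.

Definition Dn (n : nat) : list bool := flat_map (fun b => [b; b]) (nbar n) ++ [false; true].

Definition prependD (n L : nat) : nat :=
  csnd (Nat.iter (S n) (hstep (fun b a => consC (symb b) (consC (symb b) a)))
                 (cpair (S n) (consC (iS M (sym0 M)) (consC (iS M (sym1 M)) L)))).

Lemma prependD_spec n bs : prependD n (lcode M (bits_to_sig M bs)) = lcode M (bits_to_sig M (Dn n ++ bs)).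
Proof.
  unfold prependD, Dn. replace (S n) with (Pos.to_nat (Pos.of_succ_nat n)) by apply SuccNat2Pos.id_succ.
  rewrite hiter by lia. unfold nbar. unfold bits_to_sig.
  rewrite <- app_assoc, map_app. simpl.
  induction (pos_bits (Pos.of_succ_nat n)); simpl. reflexivity.
  rewrite IHl, symb_bn. reflexivity.
Qed.

Lemma DL_prependD k F G : DL k F -> DL k G -> DL k (fun l => prependD (F l) (G l)).
Proof. intros. unfold prependD, consC. apply DL_hiter; dl; auto. Qed.

Definition encL (l : list nat) : nat := fold_right prependD 0 l.

Lemma encL_spec k (x : Vector.t nat k) : encL (Vector.to_list x) = lcode M (bits_to_sig M (enc_tuple x)).
Proof.
  unfold enc_tuple. rewrite VectorSpec.to_list_fold_right. unfold encL.
  induction (Vector.to_list x); simpl. reflexivity.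
  rewrite IHl, prependD_spec. unfold Dn. rewrite <- app_assoc. reflexivity.
Qed.

Lemma skipn_nth_cons (i : nat) (l : list nat) : i < length l -> skipn i l = nth i l 0 :: skipn (S i) l.
Proof.
  revert l. induction i; intros l H; destruct l; simpl in *; try lia. reflexivity.
  apply IHi. lia.
Qed.

Lemma DL_encL k : DL k encL.
Proof.
  assert (H : forall j, j <= k -> DL k (fun l => encL (skipn (k - j) l))).
  { induction j; intros Hj.
    - eapply DL_ext. 2: apply (DL_const k 0). intros l Hl. rewrite Nat.sub_0_r, skipn_all2; auto. lia.
    - eapply DL_ext. 2: apply (DL_prependD k (fun l => nth (k - S j) l 0) _ (DL_var _ _) (IHj ltac:(lia))).
      intros l Hl. cbv beta. rewrite (skipn_nth_cons (k - S j)) by lia.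
      replace (S (k - S j)) with (k - j) by lia. reflexivity. }
  eapply DL_ext. 2: apply (H k (le_n k)). intros l Hl. rewrite Nat.sub_diag. reflexivity.
Qed.

Definition initC (L : nat) : nat :=
  cpair 0 (cpair (hdC (iS M (blank M)) L) (cpair (tlC L) (iQ M (qstart M)))).

Lemma initC_spec w : initC (lcode M (bits_to_sig M w)) = cenc M (init M w).
Proof.
  unfold initC, init, cenc. destruct (bits_to_sig M w) as [|a v] eqn:E; simpl.
  - reflexivity.
  - f_equal. f_equal. apply (hdC_spec M (a :: v)). f_equal. apply (tlC_spec M (a :: v)).
Qed.

Lemma DL_initC k F : DL k F -> DL k (fun l => initC (F l)).
Proof. intros. unfold initC, hdC, tlC. dl; auto. Qed.

End TM2.

End P6.
Import P6.

Module P7.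
Local Open Scope nat_scope.

Lemma bsum_ext n f g : (forall i, i < n -> f i = g i) -> bsum n f = bsum n g.
Proof. induction n; intros H; simpl. reflexivity. rewrite (H n) by lia. rewrite IHn. reflexivity. intros; apply H; lia. Qed.

Lemma bsum_le n f g : (forall i, i < n -> f i <= g i) -> bsum n f <= bsum n g.
Proof. induction n; intros H; simpl. lia. pose proof (H n). specialize (IHn ltac:(intros; apply H; lia)). lia. Qed.

Lemma bsum_add m n f : bsum (m + n) f = bsum m f + bsum n (fun i => f (m + i)).
Proof. induction n; simpl. rewrite Nat.add_0_r. lia. rewrite Nat.add_succ_r. simpl. rewrite IHn. lia. Qed.

Lemma bsum_plus n f g : bsum n (fun i => f i + g i) = bsum n f + bsum n g.
Proof. induction n; simpl; lia. Qed.

Lemma bsum_scal n c f : bsum n (fun i => c * f i) = c * bsum n f.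
Proof. induction n; simpl; lia. Qed.

Lemma bsum_const n c : bsum n (fun _ => c) = n * c.
Proof. induction n; simpl; lia. Qed.

Lemma bsum_double m f : bsum (2 * m) f = bsum m (fun i => f (2 * i)) + bsum m (fun i => f (2 * i + 1)).
Proof.
  induction m. reflexivity.
  replace (2 * S m) with (S (S (2 * m))) by lia.
  change (bsum (S (S (2 * m))) f) with (bsum (2 * m) f + f (2 * m) + f (S (2 * m))).
  change (bsum (S m) (fun i => f (2 * i))) with (bsum m (fun i => f (2 * i)) + f (2 * m)).
  change (bsum (S m) (fun i => f (2 * i + 1))) with (bsum m (fun i => f (2 * i + 1)) + f (2 * m + 1)).
  rewrite IHm. replace (2 * m + 1) with (S (2 * m)) by lia. lia.
Qed.

Lemma bsum_mul_mod a b f : 0 < a -> bsum (a * b) (fun t => f (t mod a)) = b * bsum a f.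
Proof.
  intro Ha. induction b. rewrite Nat.mul_0_r. reflexivity.
  replace (a * S b) with (a * b + a) by lia. rewrite bsum_add, IHb.
  rewrite (bsum_ext a (fun i => f ((a * b + i) mod a)) f). lia.
  intros i Hi. f_equal. rewrite Nat.add_comm, Nat.mul_comm. rewrite Nat.mod_add by lia. apply Nat.mod_small. lia.
Qed.

Lemma bsum_swap m n f : bsum m (fun i => bsum n (fun j => f i j)) = bsum n (fun j => bsum m (fun i => f i j)).
Proof.
  induction m; simpl. induction n; simpl; lia.
  rewrite IHm. rewrite <- bsum_plus. reflexivity.
Qed.

Lemma bsum_atmost1 n f : (forall i, i < n -> f i <= 1) ->
  (forall i j, i < n -> j < n -> f i <> 0 -> f j <> 0 -> i = j) -> bsum n f <= 1.
Proof.
  induction n; intros H1 H2; simpl. lia.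
  destruct (Nat.eq_dec (f n) 0) as [E|E].
  - rewrite E. rewrite Nat.add_0_r. apply IHn; intros; [apply H1; lia| apply H2; auto; lia].
  - assert (Z : bsum n f = 0).
    { assert (bsum n f <= bsum n (fun _ => 0)). apply bsum_le. intros i Hi.
      destruct (Nat.eq_dec (f i) 0). lia. specialize (H2 i n ltac:(lia) ltac:(lia) n0 E). lia.
      rewrite bsum_const in H. lia. }
    rewrite Z. pose proof (H1 n). lia.
Qed.

Lemma pos_bits_inj p q : pos_bits p = pos_bits q -> p = q.
Proof.
  revert q. induction p; destruct q; simpl; intros H; try reflexivity;
  try (apply app_inj_tail in H; destruct H as [H1 H2]; try discriminate; f_equal; auto);
  try (destruct (pos_bits _); simpl in H; discriminate);
  try (symmetry in H; destruct (pos_bits _); simpl in H; discriminate).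
Qed.

Lemma nbar_inj a b : nbar a = nbar b -> a = b.
Proof.
  unfold nbar. intro H. apply pos_bits_inj in H. apply (f_equal Pos.to_nat) in H.
  rewrite !SuccNat2Pos.id_succ in H. lia.
Qed.

Lemma bits_to_sig_inj M a b : bits_to_sig M a = bits_to_sig M b -> a = b.
Proof.
  destruct (syms_distinct M) as [D _].
  revert b. induction a; destruct b; simpl; intros H; try discriminate; auto.
  injection H as H1 H2. f_equal. destruct a, b; auto; congruence. auto.
Qed.

Lemma bl_mod t n z : n <= z -> bl (t mod 2 ^ n) n = firstn n (bl t z).
Proof.
  revert t z. induction n; intros t z Hz. reflexivity.
  destruct z as [|z]. lia.
  change (bl (t mod 2 ^ S n) (S n)) with (((t mod 2 ^ S n) mod 2 =? 1) :: bl ((t mod 2 ^ S n) / 2) n).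
  change (bl t (S z)) with ((t mod 2 =? 1) :: bl (t / 2) z). cbn [firstn].
  assert (E : t mod 2 ^ S n = t mod 2 + 2 * ((t / 2) mod 2 ^ n)).
  { rewrite Nat.pow_succ_r', Nat.mod_mul_r. reflexivity. lia. apply Nat.pow_nonzero; lia. }
  assert (E1 : (t mod 2 ^ S n) mod 2 = t mod 2).
  { rewrite E. rewrite Nat.mul_comm, Nat.mod_add by lia. apply Nat.mod_mod. lia. }
  assert (E2 : (t mod 2 ^ S n) / 2 = (t / 2) mod 2 ^ n).
  { rewrite E. rewrite Nat.mul_comm, Nat.div_add by lia. rewrite Nat.div_small. lia.
    apply Nat.mod_upper_bound. lia. }
  rewrite E1, E2, (IHn _ z) by lia. reflexivity.
Qed.

Section TM3.
Variable M : PTM.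

Lemma cnt_spec c n y : cnt M (cenc M c) n y = bsum (2 ^ n) (fun t => EMb (halts_from M c (bl t n) (nbar y))).
Proof.
  unfold cnt. apply bsum_ext. intros t _. rewrite chk_spec by lia. lia.
Qed.

Lemma halts_from_prefix c L n n' out out' :
  n < n' -> n' <= length L -> halts_from M c (firstn n L) out -> halts_from M c (firstn n' L) out' -> False.
Proof.
  intros Hn HL [_ [F1 _]] [H2 _].
  assert (Hl : n < length (firstn n' L)) by (rewrite length_firstn; lia).
  specialize (H2 n Hl). rewrite firstn_firstn in H2. replace (Nat.min n n') with n in H2 by lia.
  congruence.
Qed.

Lemma length_bl t n : length (bl t n) = n.
Proof. revert t; induction n; simpl; auto. Qed.

Lemma EMb_le P : EMb P <= 1.
Proof. unfold EMb. destruct (excluded_middle_informative P); lia. Qed.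

Lemma EMb_ne0 P : EMb P <> 0 -> P.
Proof. unfold EMb. destruct (excluded_middle_informative P); auto. lia. Qed.

Lemma bound c z : bsum (S z) (fun w => cnt M (cenc M c) (cfst w) (csnd w) * 2 ^ (z - cfst w)) <= 2 ^ z.
Proof.
  set (E := fun w t => EMb (halts_from M c (firstn (cfst w) (bl t z)) (nbar (csnd w)))).
  transitivity (bsum (S z) (fun w => bsum (2 ^ z) (fun t => E w t))).
  { apply Nat.eq_le_incl. apply bsum_ext. intros w Hw.
    assert (Hn : cfst w <= z) by (pose proof (cfst_le w); lia).
    rewrite cnt_spec.
    transitivity (bsum (2 ^ cfst w * 2 ^ (z - cfst w)) (fun t => EMb (halts_from M c (bl (t mod 2 ^ cfst w) (cfst w)) (nbar (csnd w))))).
    - rewrite (bsum_mul_mod (2 ^ cfst w) (2 ^ (z - cfst w)) (fun t => EMb (halts_from M c (bl t (cfst w)) (nbar (csnd w))))).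
      lia. apply Nat.neq_0_lt_0. apply Nat.pow_nonzero. lia.
    - rewrite <- Nat.pow_add_r. replace (cfst w + (z - cfst w)) with z by lia.
      apply bsum_ext. intros t _. unfold E. rewrite (bl_mod t (cfst w) z) by lia. reflexivity. }
  rewrite bsum_swap. transitivity (bsum (2 ^ z) (fun _ => 1)).
  2:{ rewrite bsum_const. lia. }
  apply bsum_le. intros t _. apply bsum_atmost1.
  - intros. apply EMb_le.
  - intros w w' Hw Hw' N1 N2. apply EMb_ne0 in N1, N2.
    assert (Hn : cfst w <= z) by (pose proof (cfst_le w); lia).
    assert (Hn' : cfst w' <= z) by (pose proof (cfst_le w'); lia).
    assert (Ef : cfst w = cfst w').
    { destruct (Nat.lt_trichotomy (cfst w) (cfst w')) as [L|[L|L]]; auto; exfalso.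
      - eapply (halts_from_prefix c (bl t z) (cfst w) (cfst w')); eauto. rewrite length_bl; lia.
      - eapply (halts_from_prefix c (bl t z) (cfst w') (cfst w)); eauto. rewrite length_bl; lia. }
    rewrite <- Ef in N2. destruct N1 as [_ [_ [O1 _]]]. destruct N2 as [_ [_ [O2 _]]].
    rewrite O1 in O2. apply bits_to_sig_inj, nbar_inj in O2.
    rewrite <- (cpair_surj w), <- (cpair_surj w'). congruence.
Qed.


End TM3.

End P7.
Import P7.

Module P8.
Local Open Scope R_scope.

Lemma fold_map_app {A} (g : A -> R) L1 L2 :
  fold_right Rplus 0 (map g (L1 ++ L2)) = fold_right Rplus 0 (map g L1) + fold_right Rplus 0 (map g L2).
Proof. induction L1; simpl. ring. rewrite IHL1. ring. Qed.

Lemma fold_bitlists n : forall (P : list bool -> Prop) c,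
  fold_right Rplus 0 (map (fun bs => if excluded_middle_informative (P bs) then c else 0) (bitlists n))
  = INR (bsum (2 ^ n) (fun t => EMb (P (bl t n)))) * c.
Proof.
  induction n; intros P c.
  - simpl. unfold EMb. destruct (excluded_middle_informative (P [])); simpl; ring.
  - simpl bitlists.
    assert (E : forall L, fold_right Rplus 0 (map (fun bs => if excluded_middle_informative (P bs) then c else 0)
                  (flat_map (fun l => [false :: l; true :: l]) L)) =
              fold_right Rplus 0 (map (fun bs => if excluded_middle_informative (P (false :: bs)) then c else 0) L) +
              fold_right Rplus 0 (map (fun bs => if excluded_middle_informative (P (true :: bs)) then c else 0) L)).
    { induction L; simpl. ring. rewrite IHL. ring. }
    rewrite E, IHn, IHn. rewrite <- Rmult_plus_distr_r, <- plus_INR. f_equal. f_equal.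
    rewrite Nat.pow_succ_r', bsum_double. f_equal.
    + apply bsum_ext. intros t _. change (bl (2 * t) (S n)) with (((2 * t) mod 2 =? 1)%nat :: bl ((2 * t) / 2) n). f_equal. f_equal.
      replace (2 * t mod 2 =? 1)%nat with false. replace (2 * t / 2)%nat with t. reflexivity.
      rewrite Nat.mul_comm, Nat.div_mul; lia. rewrite Nat.mul_comm, Nat.mod_mul; auto.
    + apply bsum_ext. intros t _. change (bl (2 * t + 1) (S n)) with (((2 * t + 1) mod 2 =? 1)%nat :: bl ((2 * t + 1) / 2) n). f_equal. f_equal.
      replace ((2 * t + 1) mod 2 =? 1)%nat with true. replace ((2 * t + 1) / 2)%nat with t. reflexivity.
      apply Nat.div_unique with 1%nat; lia. symmetry. apply Nat.eqb_eq. symmetry. apply Nat.mod_unique with t; lia.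
Qed.

Lemma IO_eq M w out : IO M w out =
  nsum (fun n => INR (bsum (2 ^ n) (fun t => EMb (halts_with M w (bl t n) out))) * (/2) ^ n).
Proof.
  unfold IO. f_equal. apply functional_extensionality; intro n. apply fold_bitlists.
Qed.

Lemma cnt_IO M w n y : cnt M (cenc M (init M w)) n y = bsum (2 ^ n) (fun t => EMb (halts_with M w (bl t n) (nbar y))).
Proof. rewrite cnt_spec. reflexivity. Qed.

End P8.
Import P8.

Module P9.
Local Open Scope R_scope.

Lemma inf_sum_geom_bound (f : nat -> R) (l K : R) :
  0 <= K -> (forall N, Rabs (sum_f_R0 f N - l) <= K * (/2) ^ (S N)) -> infinite_sum f l.
Proof.
  intros HK H eps He.
  destruct (pow_lt_1_zero (/2) ltac:(rewrite Rabs_pos_eq; lra) (eps / (K + 1))) as [N HN].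
  { apply Rdiv_lt_0_compat; lra. }
  exists N. intros n Hn. unfold R_dist.
  eapply Rle_lt_trans. apply H.
  specialize (HN (S n) ltac:(lia)). rewrite Rabs_pos_eq in HN by (apply pow_le; lra).
  assert (0 <= (/2) ^ S n) by (apply pow_le; lra).
  apply Rmult_lt_compat_r with (r := K + 1) in HN; [|lra].
  unfold Rdiv in HN. rewrite Rmult_assoc, Rinv_l, Rmult_1_r in HN by lra. nra.
Qed.

Lemma geom_partial N : sum_f_R0 (fun i => (/2) ^ (S i)) N = 1 - (/2) ^ (S N).
Proof. induction N; simpl in *. field. rewrite IHN. field. Qed.

Definition rstp (B r : nat) : nat := if (B <=? 2 * r)%nat then (2 * r - B)%nat else (2 * r)%nat.
Definition rem (A B i : nat) : nat := Nat.iter i (rstp B) A.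
Definition digit (A B i : nat) : nat :=
  if (B <=? A)%nat then 1%nat else if (B <=? 2 * rem A B i)%nat then 1%nat else 0%nat.
Definition val (A B : nat) : R := if (B <=? A)%nat then 1 else INR A / INR B.

Lemma rem_lt A B i : (A < B)%nat -> (rem A B i < B)%nat.
Proof.
  intro H. induction i. exact H. change (rem A B (S i)) with (rstp B (rem A B i)). unfold rstp.
  destruct (Nat.leb_spec B (2 * rem A B i)); lia.
Qed.

Lemma digit_le A B i : (digit A B i <= 1)%nat.
Proof. unfold digit. destruct (B <=? A)%nat; [lia|]. destruct (B <=? _)%nat; lia. Qed.

Lemma digits_partial A B N : (A < B)%nat ->
  sum_f_R0 (fun i => INR (digit A B i) * (/2) ^ (S i)) N =
  INR A / INR B - INR (rem A B (S N)) * (/2) ^ (S N) / INR B.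
Proof.
  intro H. assert (HB : 0 < INR B) by (apply lt_0_INR; lia).
  assert (Step : forall i, INR (rem A B (S i)) = 2 * INR (rem A B i) - INR (digit A B i) * INR B).
  { intro i. unfold digit. replace (B <=? A)%nat with false by (symmetry; apply Nat.leb_gt; lia).
    change (rem A B (S i)) with (rstp B (rem A B i)). unfold rstp.
    destruct (Nat.leb_spec B (2 * rem A B i)).
    - rewrite minus_INR by lia. rewrite mult_INR. simpl. ring.
    - rewrite mult_INR. simpl. ring. }
  induction N.
  - simpl sum_f_R0. rewrite Step. change (rem A B 0) with A. field. lra.
  - rewrite tech5, IHN, (Step (S N)). simpl pow. field. lra.
Qed.

Lemma digits_sum A B : infinite_sum (fun i => INR (digit A B i) * (/2) ^ (S i)) (val A B).
Proof.
  unfold val. destruct (Nat.leb_spec B A).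
  - apply (inf_sum_geom_bound _ _ 1). lra. intro N.
    replace (sum_f_R0 (fun i => INR (digit A B i) * (/ 2) ^ S i) N) with (1 - (/2) ^ (S N)).
    + replace (1 - (/ 2) ^ S N - 1) with (- (/2) ^ S N) by ring. rewrite Rabs_Ropp, Rabs_pos_eq. lra. apply pow_le; lra.
    + rewrite <- geom_partial. apply sum_eq. intros i _. unfold digit.
      replace (B <=? A)%nat with true by (symmetry; apply Nat.leb_le; lia). simpl. ring.
  - apply (inf_sum_geom_bound _ _ 1). lra. intro N. rewrite digits_partial by lia.
    assert (HB : 0 < INR B) by (apply lt_0_INR; lia).
    pose proof (rem_lt A B (S N) H). apply lt_INR in H0.
    assert (0 <= INR (rem A B (S N))) by apply pos_INR.
    assert (0 < (/2) ^ S N) by (apply pow_lt; lra).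
    replace (INR A / INR B - INR (rem A B (S N)) * (/ 2) ^ S N / INR B - INR A / INR B)
      with (- (INR (rem A B (S N)) / INR B * (/ 2) ^ S N)) by (field; lra).
    rewrite Rabs_Ropp, Rabs_pos_eq.
    + apply Rmult_le_compat_r. lra. apply Rmult_le_reg_r with (INR B). lra.
      unfold Rdiv. rewrite Rmult_assoc, Rinv_l; lra.
    + apply Rmult_le_pos; [|lra]. unfold Rdiv; apply Rmult_le_pos; [lra|]; apply Rlt_le, Rinv_0_lt_compat; lra.
Qed.

Lemma digits_sum_c A B : infinite_sum (fun i => INR (1 - digit A B i) * (/2) ^ (S i)) (1 - val A B).
Proof.
  pose proof (digits_sum A B) as H.
  apply infinite_sum_cv. apply cv_infinite_sum in H.
  assert (G : Un_cv (fun N => sum_f_R0 (fun i => (/2) ^ (S i)) N) 1).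
  { apply cv_infinite_sum. apply (inf_sum_geom_bound _ _ 1). lra. intro N. rewrite geom_partial.
    replace (1 - (/ 2) ^ S N - 1) with (- (/2) ^ S N) by ring. rewrite Rabs_Ropp, Rabs_pos_eq. lra. apply pow_le; lra. }
  pose proof (CV_minus _ _ _ _ G H) as C.
  eapply Un_cv_ext. 2: exact C. intro N. simpl. rewrite <- minus_sum. apply sum_eq. intros i _.
  pose proof (digit_le A B i). destruct (digit A B i) as [|[|]]; simpl; try lia; ring.
Qed.

End P9.
Import P9.

Module P10.
Local Open Scope R_scope.

Section Hazard.
Variable C : nat -> nat.
Hypothesis Hb : forall z, (bsum (S z) (fun w => C w * 2 ^ (z - cfst w)) <= 2 ^ z)%nat.

Definition Num (z : nat) : nat := (C z * 2 ^ (z - cfst z))%nat.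
Definition NT (z : nat) : nat := bsum z (fun w => C w * 2 ^ (z - cfst w))%nat.
Definition Den (z : nat) : nat := (2 ^ z - NT z)%nat.
Definition hz (z : nat) : R := val (Num z) (Den z).
Definition pz (z : nat) : R := INR (C z) * (/2) ^ (cfst z).

Lemma Bnd z : (NT z + Num z <= 2 ^ z)%nat.
Proof. apply Hb. Qed.

Lemma NT_S z : NT (S z) = (2 * (NT z + Num z))%nat.
Proof.
  transitivity (bsum (S z) (fun i => 2 * (C i * 2 ^ (z - cfst i))))%nat.
  - unfold NT. apply bsum_ext. intros i Hi. pose proof (cfst_le i).
    replace (S z - cfst i)%nat with (S (z - cfst i)) by lia. rewrite Nat.pow_succ_r'. lia.
  - rewrite bsum_scal. change (bsum (S z) (fun w => C w * 2 ^ (z - cfst w)))%nat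
      with (bsum z (fun w => C w * 2 ^ (z - cfst w)) + C z * 2 ^ (z - cfst z))%nat.
    reflexivity.
Qed.

Lemma Den_S z : Den (S z) = (2 * (Den z - Num z))%nat.
Proof. unfold Den. rewrite NT_S. pose proof (Bnd z). rewrite Nat.pow_succ_r'. lia. Qed.

Lemma prod_hz z : prodlt z (fun w => 1 - hz w) = INR (Den z) * (/2) ^ z.
Proof.
  induction z.
  - simpl. unfold Den, NT. simpl. ring.
  - simpl prodlt. rewrite IHz, Den_S. unfold hz, val.
    destruct (Nat.leb_spec (Den z) (Num z)).
    + replace (Den z - Num z)%nat with 0%nat by lia. simpl. ring.
    + rewrite mult_INR, minus_INR by lia. simpl pow. simpl INR.
      assert (0 < INR (Den z)) by (apply lt_0_INR; lia). field. lra.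
Qed.

Lemma pow2_inv m : 2 ^ m * (/2) ^ m = 1.
Proof. induction m; simpl. ring. replace (2 * 2 ^ m * (/ 2 * (/ 2) ^ m)) with (2 ^ m * (/ 2) ^ m) by field. exact IHm. Qed.

Lemma pz_Num z : INR (Num z) * (/2) ^ z = pz z.
Proof.
  unfold Num, pz. pose proof (cfst_le z). rewrite mult_INR, pow_INR.
  replace (INR 2) with 2 by (simpl; ring).
  assert (E : (/2) ^ z = (/2) ^ (cfst z) * (/2) ^ (z - cfst z)) by (rewrite <- pow_add; f_equal; lia).
  rewrite E.
  replace (INR (C z) * 2 ^ (z - cfst z) * ((/ 2) ^ cfst z * (/ 2) ^ (z - cfst z)))
    with (INR (C z) * (/ 2) ^ cfst z * (2 ^ (z - cfst z) * (/ 2) ^ (z - cfst z))) by ring.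
  rewrite pow2_inv. ring.
Qed.

Lemma mu_val z : hz z * (INR (Den z) * (/2) ^ z) = pz z.
Proof.
  rewrite <- pz_Num. unfold hz, val. destruct (Nat.leb_spec (Den z) (Num z)).
  - assert (Den z = Num z). { pose proof (Bnd z). unfold Den in *. lia. } rewrite H0. ring.
  - assert (0 < INR (Den z)) by (apply lt_0_INR; lia). field. lra.
Qed.

End Hazard.

End P10.
Import P10.

Module P11.
Local Open Scope R_scope.

Fixpoint rsum (f : nat -> R) (n : nat) : R := match n with O => 0 | S m => rsum f m + f m end.

Lemma sum_rsum f N : sum_f_R0 f N = rsum f (S N).
Proof. induction N; simpl in *. ring. rewrite IHN. ring. Qed.

Lemma rsum_add f m n : rsum f (m + n) = rsum f m + rsum (fun i => f (m + i)%nat) n.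
Proof. induction n; simpl. rewrite Nat.add_0_r. ring. rewrite Nat.add_succ_r. simpl. rewrite IHn. ring. Qed.

Lemma rsum_mono f m n : (forall i, 0 <= f i) -> (m <= n)%nat -> rsum f m <= rsum f n.
Proof. intros H Hmn. induction Hmn. lra. simpl. specialize (H m0). lra. Qed.

Lemma rsum_le f g n : (forall i, (i < n)%nat -> f i <= g i) -> rsum f n <= rsum g n.
Proof. induction n; intros H; simpl. lra. pose proof (H n ltac:(lia)). specialize (IHn ltac:(intros; apply H; lia)). lra. Qed.

Lemma rsum_ext f g n : (forall i, (i < n)%nat -> f i = g i) -> rsum f n = rsum g n.
Proof. induction n; intros H; simpl. lra. rewrite H, IHn by (intros; try apply H; lia). ring. Qed.

Lemma rsum_single (c : nat -> R) y n :
  rsum (fun b => if (y =? b)%nat then c b else 0) n = if (y <? n)%nat then c y else 0.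
Proof.
  induction n; simpl. destruct y; reflexivity. rewrite IHn.
  destruct (Nat.eqb_spec y n); destruct (Nat.ltb_spec y n); destruct (Nat.ltb_spec y (S n)); subst; try lia; ring.
Qed.

Lemma block (G : nat -> nat -> R) y K :
  rsum (fun z => if (y =? csnd z)%nat then G (cfst z) (csnd z) else 0) (tri K) = rsum (fun n => G n y) (K - y).
Proof.
  induction K.
  - simpl. destruct y; reflexivity.
  - change (tri (S K)) with (tri K + S K)%nat. rewrite rsum_add, IHK.
    assert (Eb : rsum (fun i => if (y =? csnd (tri K + i))%nat then G (cfst (tri K + i)) (csnd (tri K + i)) else 0) (S K)
               = rsum (fun b => if (y =? b)%nat then G (K - b)%nat b else 0) (S K)).
    { apply rsum_ext. intros b Hb. replace (tri K + b)%nat with (cpair (K - b) b).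
      rewrite cfst_pair, csnd_pair. reflexivity.
      unfold cpair. f_equal. f_equal. lia. }
    rewrite Eb, rsum_single. destruct (Nat.ltb_spec y (S K)).
    + replace (S K - y)%nat with (S (K - y)) by lia. simpl. reflexivity.
    + replace (S K - y)%nat with 0%nat by lia. replace (K - y)%nat with 0%nat by lia. simpl. ring.
Qed.

Lemma nsum_rsum (f : nat -> R) (L : R) : Un_cv (fun n => rsum f n) L -> nsum f = L.
Proof.
  intro H. apply nsum_spec. apply infinite_sum_cv. intros eps He. destruct (H eps He) as [N HN].
  exists N. intros n Hn. rewrite sum_rsum. apply HN. lia.
Qed.

Lemma tri_ge_id K : (K <= tri K)%nat.
Proof. apply tri_ge. Qed.

Lemma rearr (G : nat -> nat -> R) y :
  (forall n m, 0 <= G n m) -> (forall N, rsum (fun n => G n y) N <= 1) ->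
  nsum (fun z => (if (y =? csnd z)%nat then 1 else 0) * G (cfst z) (csnd z)) = nsum (fun n => G n y).
Proof.
  intros Hpos Hub.
  set (f1 := fun z => (if (y =? csnd z)%nat then 1 else 0) * G (cfst z) (csnd z)).
  set (v := fun N => rsum (fun n => G n y) N).
  assert (Hg : Un_growing v). { intro n. unfold v. simpl. specialize (Hpos n y). lra. }
  destruct (growing_cv v Hg) as [l Hl].
  { exists 1. intros r [i ->]. apply Hub. }
  assert (E1 : forall K, rsum f1 (tri K) = v (K - y)%nat).
  { intro K. unfold v. rewrite <- block. apply rsum_ext. intros z _. unfold f1.
    destruct (y =? csnd z)%nat; ring. }
  assert (Hf1 : forall i, 0 <= f1 i). { intro i. unfold f1. destruct (y =? csnd i)%nat. rewrite Rmult_1_l. apply Hpos. lra. }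
  rewrite (nsum_rsum f1 l), (nsum_rsum _ l); auto.
  intros eps He. destruct (Hl eps He) as [N HN].
  exists (tri (N + y)). intros m Hm. unfold R_dist.
  assert (Up : rsum f1 m <= l).
  { transitivity (rsum f1 (tri (m + y))).
    apply rsum_mono; auto. pose proof (tri_ge (m + y)). lia.
    rewrite E1. apply growing_ineq; auto. }
  assert (Lo : rsum f1 (tri (N + y)) <= rsum f1 m) by (apply rsum_mono; auto).
  rewrite E1 in Lo. replace (N + y - y)%nat with N in Lo by lia.
  specialize (HN N (le_n N)). unfold R_dist in HN.
  rewrite Rabs_left1 by lra. rewrite Rabs_left1 in HN. lra.
  pose proof (growing_ineq v l Hg Hl N). lra.
Qed.

End P11.
Import P11.

Module P12.
Local Open Scope R_scope.

Definition gg (m : nat) : PF (S m) :=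
  compPF (n := 1) randPF (fun _ => dirac (fun _ : Vector.t nat (S m) => 0%nat)).
Definition Geo (m : nat) : PF m := muPF (gg m).

Lemma PR_Geo m : PR m (Geo m).
Proof.
  apply PR_mu. apply PR_comp. apply PR_rand. intros _. apply (DL_zero (S m)).
Qed.

Lemma gg_val m v y : gg m v y = if (y =? 0)%nat then /2 else if (y =? 1)%nat then /2 else 0.
Proof.
  unfold gg, compPF. unfold dirac.
  rewrite (sumvec_dirac 1 (fun zs => randPF zs y) (fun _ => 0%nat)). reflexivity.
Qed.

Lemma prodlt_const y c : prodlt y (fun _ => c) = c ^ y.
Proof. induction y; simpl. reflexivity. rewrite IHy. ring. Qed.

Lemma Geo_val m v kk : Geo m v kk = (/2) ^ (S kk).
Proof.
  unfold Geo, muPF. rewrite gg_val. simpl Nat.eqb. cbv iota.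
  assert (E : forall w, nsum (fun j => gg m (Vector.shiftin w v) (S j)) = /2).
  { intro w. rewrite <- (nsum_single 0 (/2)). f_equal. apply functional_extensionality; intro j.
    rewrite gg_val. destruct j; reflexivity. }
  transitivity (/2 * prodlt kk (fun _ => /2)).
  f_equal. f_equal. apply functional_extensionality; intro w. apply E.
  rewrite prodlt_const. reflexivity.
Qed.

Lemma vec_of_nth n (v : Vector.t nat n) : vec_of n (fun i => Vector.nth v i) = v.
Proof.
  induction v. reflexivity. simpl. f_equal. apply IHv.
Qed.

Lemma sumvec_S n F : sumvec (S n) F = nsum (fun z => sumvec n (fun v => F (Vector.cons nat z n v))).
Proof. reflexivity. Qed.
Lemma prodfin_S n a : prodfin (S n) a = a Fin.F1 * prodfin n (fun i => a (Fin.FS i)).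
Proof. reflexivity. Qed.

Section HzSec.
Variable k : nat.
Variable T : list nat -> nat.

Definition gHz (i : Fin.t (S (S k))) : PF (S k) :=
  Fin.caseS' i (fun _ => PF (S k)) (Geo (S k)) (fun j => projPF (S k) j).

Definition HzPF : PF (S k) := compPF (n := S (S k)) (dirac (fun v => T (Vector.to_list v))) gHz.

Lemma PR_HzPF : DL (S (S k)) T -> PR (S k) HzPF.
Proof.
  intro HT. apply PR_comp. exact HT.
  intro i. apply (Fin.caseS' i). apply PR_Geo. intro j. apply PR_proj.
Qed.

Lemma HzPF_val xz j :
  HzPF xz j = nsum (fun kk => (/2) ^ (S kk) * (if (j =? T (kk :: Vector.to_list xz))%nat then 1 else 0)).
Proof.
  unfold HzPF, compPF. rewrite sumvec_S. f_equal. apply functional_extensionality; intro kk.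
  transitivity (sumvec (S k) (fun v => (dirac (fun v0 : Vector.t nat (S (S k)) => T (Vector.to_list v0)) (Vector.cons nat kk (S k) v) j * (/2) ^ (S kk)) *
     prodfin (S k) (fun i => if (Vector.nth v i =? Vector.nth xz i)%nat then 1 else 0))).
  - f_equal. apply functional_extensionality; intro v. rewrite prodfin_S.
    unfold gHz. simpl Fin.caseS'. rewrite Geo_val. unfold projPF. simpl Vector.nth. ring.
  - rewrite sumvec_dirac, vec_of_nth. unfold dirac. rewrite VectorSpec.to_list_cons. ring.
Qed.

Lemma HzPF_digits (A B : Vector.t nat (S k) -> nat) :
  (forall xz kk, T (kk :: Vector.to_list xz) = (1 - digit (A xz) (B xz) kk)%nat) ->
  forall xz, HzPF xz 0%nat = val (A xz) (B xz) /\ nsum (fun j => HzPF xz (S j)) = 1 - val (A xz) (B xz).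
Proof.
  intros HT xz. split.
  - rewrite HzPF_val. apply nsum_spec. eapply infinite_sum_cv.
    pose proof (cv_infinite_sum _ _ (digits_sum (A xz) (B xz))) as C.
    eapply Un_cv_ext. 2: exact C. intro N. apply sum_eq. intros i _. rewrite HT.
    pose proof (digit_le (A xz) (B xz) i). destruct (digit (A xz) (B xz) i) as [|[|]]; simpl; try lia; ring.
  - rewrite <- (nsum_single 0 (1 - val (A xz) (B xz))). f_equal. apply functional_extensionality; intro j.
    rewrite HzPF_val. destruct j.
    + simpl. apply nsum_spec. eapply infinite_sum_cv.
      pose proof (cv_infinite_sum _ _ (digits_sum_c (A xz) (B xz))) as C.
      eapply Un_cv_ext. 2: exact C. intro N. apply sum_eq. intros i _. rewrite HT.
      pose proof (digit_le (A xz) (B xz) i). destruct (digit (A xz) (B xz) i) as [|[|]]; simpl; try lia; ring.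
    + simpl. transitivity (nsum (fun _ => 0)); [|apply nsum_zero]. f_equal. apply functional_extensionality; intro i. rewrite HT.
      pose proof (digit_le (A xz) (B xz) i). destruct (digit (A xz) (B xz) i) as [|[|]]; simpl; try lia; ring.
Qed.

Definition OUT : PF k := compPF (n := 1) (dirac (fun v => csnd (Vector.hd v))) (fun _ => muPF HzPF).

Lemma PR_OUT : DL (S (S k)) T -> PR k OUT.
Proof.
  intro HT. apply PR_comp.
  - pose proof (DL_csnd 1 (fun l => nth 0 l 0%nat) (DL_var 1 0)) as H. unfold DL in H.
    replace (dirac (fun v : Vector.t nat 1 => csnd (Vector.hd v))) with
      (dirac (fun x : Vector.t nat 1 => csnd (nth 0 (Vector.to_list x) 0%nat))). exact H.
    unfold dirac. apply functional_extensionality; intro x. rewrite (VectorSpec.to_list_hd _ _ x 0%nat).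
    destruct (Vector.to_list x); reflexivity.
  - intros _. apply PR_mu. apply PR_HzPF. exact HT.
Qed.

Lemma OUT_val x y : OUT x y = nsum (fun z => (if (y =? csnd z)%nat then 1 else 0) * muPF HzPF x z).
Proof.
  unfold OUT, compPF. rewrite sumvec_S. f_equal. apply functional_extensionality; intro z.
  simpl. unfold dirac. simpl. ring.
Qed.
End HzSec.

End P12.
Import P12.

Module P13.
Local Open Scope R_scope.

Lemma DL_digit k A B I : DL k A -> DL k B -> DL k I -> DL k (fun l => digit (A l) (B l) (I l)).
Proof.
  intros HA HB HI. unfold digit, rem.
  apply DL_if_leb; auto. apply DL_const.
  apply DL_if_leb; auto. apply DL_mul. apply DL_const.
  apply (DL_iter k A I (fun x s => rstp (B x) s)); auto.
  unfold rstp. apply DL_if_leb. apply DL_weaken; auto. apply DL_mul; [apply DL_const|apply DL_var].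
  apply DL_sub. apply DL_mul; [apply DL_const|apply DL_var]. apply DL_weaken; auto.
  apply DL_mul; [apply DL_const|apply DL_var].
  all: apply DL_const.
Qed.

Lemma DL_shift1 k F : DL k F -> DL (S (S k)) (fun l => F (firstn k (tl l))).
Proof.
  intro HF. pose proof (DL_comp k (S (S k)) F (fun i l => nth (S i) l 0%nat) HF (fun i _ => DL_var _ _)) as H.
  eapply DL_ext. 2: exact H. intros l Hl. cbv beta. f_equal.
  destruct l as [|a l]. simpl in Hl; lia.
  simpl tl. rewrite <- map_nth_seq_firstn by (simpl in Hl; lia). reflexivity.
Qed.

Section Main.
Variable M : PTM.
Variable k : nat.

Definition Wf (l : list nat) : nat := initC M (encL M (firstn k (tl l))).
Definition Cf (l : list nat) (w : nat) : nat := cnt M (Wf l) (cfst w) (csnd w).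
Definition NumF (L : list nat) : nat := let z := nth (S k) L 0%nat in (Cf L z * 2 ^ (z - cfst z))%nat.
Definition DenF (L : list nat) : nat :=
  let z := nth (S k) L 0%nat in (2 ^ z - bsum z (fun w => Cf L w * 2 ^ (z - cfst w)))%nat.
Definition Tf (l : list nat) : nat := (1 - digit (NumF l) (DenF l) (nth 0 l 0%nat))%nat.

Lemma DL_Wf : DL (S (S k)) Wf.
Proof. unfold Wf. apply DL_initC. apply (DL_shift1 k (encL M)). apply DL_encL. Qed.

Lemma DL_Tf : DL (S (S k)) Tf.
Proof.
  unfold Tf. apply DL_sub. apply DL_const. apply DL_digit; [| |apply DL_var].
  - unfold NumF, Cf. cbv zeta. apply DL_mul.
    apply DL_cnt. apply DL_Wf. apply DL_cfst, DL_var. apply DL_csnd, DL_var.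
    apply DL_pow2. apply DL_sub. apply DL_var. apply DL_cfst, DL_var.
  - unfold DenF, Cf. cbv zeta. apply DL_sub. apply DL_pow2, DL_var.
    apply (DL_bsum (S (S k)) (fun l => nth (S k) l 0%nat)
       (fun L w => cnt M (Wf L) (cfst w) (csnd w) * 2 ^ (nth (S k) L 0%nat - cfst w))%nat).
    apply DL_var. apply DL_mul. apply DL_cnt.
    apply (DL_weaken (S (S k)) (S (S (S k))) Wf ltac:(lia) DL_Wf).
    apply DL_cfst, DL_var. apply DL_csnd, DL_var.
    apply DL_pow2. apply DL_sub. 2: apply DL_cfst, DL_var.
    eapply DL_ext. 2: apply (DL_weaken (S (S k)) (S (S (S k))) _ ltac:(lia) (DL_var _ (S k))).
    intros l Hl. cbv beta. reflexivity.
Qed.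

Definition HZ : PF (S k) := HzPF k Tf.
Definition OUTk : PF k := OUT k Tf.

Section X.
Variable x : Vector.t nat k.
Definition Wx : nat := cenc M (init M (enc_tuple x)).
Definition Cx (z : nat) : nat := cnt M Wx (cfst z) (csnd z).

Lemma Hbx z : (bsum (S z) (fun w => Cx w * 2 ^ (z - cfst w)) <= 2 ^ z)%nat.
Proof. unfold Cx, Wx. apply P7.bound. Qed.

Lemma Wf_x (w : nat) : Wf (0%nat :: Vector.to_list x ++ [w]) = Wx.
Proof.
  unfold Wf, Wx. simpl tl. rewrite firstn_app_len by apply VectorSpec.length_to_list.
  rewrite encL_spec, initC_spec. reflexivity.
Qed.

Lemma nth_x (w : nat) : nth (S k) (0%nat :: Vector.to_list x ++ [w]) 0%nat = w.
Proof.
  simpl. rewrite app_nth2; rewrite VectorSpec.length_to_list. rewrite Nat.sub_diag. reflexivity. lia.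
Qed.

Lemma NumF_x w : NumF (0%nat :: Vector.to_list x ++ [w]) = Num Cx w.
Proof. unfold NumF, Num, Cf, Cx. cbv zeta. rewrite nth_x, Wf_x. reflexivity. Qed.

Lemma DenF_x w : DenF (0%nat :: Vector.to_list x ++ [w]) = Den Cx w.
Proof. unfold DenF, Den, NT, Cf, Cx. cbv zeta. rewrite nth_x, Wf_x. reflexivity. Qed.

Lemma HZ_vals w : HZ (Vector.shiftin w x) 0%nat = hz Cx w /\
  nsum (fun j => HZ (Vector.shiftin w x) (S j)) = 1 - hz Cx w.
Proof.
  pose proof (HzPF_digits k Tf (fun xz => NumF (0%nat :: Vector.to_list xz)) (fun xz => DenF (0%nat :: Vector.to_list xz))
     (fun xz kk => eq_refl) (Vector.shiftin w x)) as H.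
  unfold HZ. cbv beta in H. rewrite to_list_shiftin, NumF_x, DenF_x in H. exact H.
Qed.

Lemma mu_HZ z : muPF HZ x z = pz Cx z.
Proof.
  unfold muPF. destruct (HZ_vals z) as [-> _].
  replace (fun z0 => nsum (fun j => HZ (Vector.shiftin z0 x) (S j))) with (fun w => 1 - hz Cx w).
  2:{ apply functional_extensionality; intro w. destruct (HZ_vals w) as [_ ->]. reflexivity. }
  rewrite (prod_hz Cx Hbx). apply (mu_val Cx Hbx).
Qed.

Lemma rsum_pz Z : rsum (pz Cx) Z = INR (NT Cx Z) * (/2) ^ Z.
Proof.
  induction Z. simpl. unfold NT. simpl. ring.
  simpl rsum. rewrite IHZ, NT_S. rewrite <- (pz_Num Cx). rewrite mult_INR, plus_INR. simpl pow. simpl INR. field.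
Qed.

Lemma OUT_IO y : OUTk x y = IO M (enc_tuple x) (nbar y).
Proof.
  unfold OUTk. rewrite OUT_val. fold HZ.
  rewrite IO_eq.
  set (G := fun n y' => INR (cnt M Wx n y') * (/2) ^ n).
  transitivity (nsum (fun z => (if (y =? csnd z)%nat then 1 else 0) * G (cfst z) (csnd z))).
  { f_equal. apply functional_extensionality; intro z. rewrite mu_HZ. reflexivity. }
  transitivity (nsum (fun n => G n y)).
  - apply rearr.
    + intros. unfold G. apply Rmult_le_pos. apply pos_INR. apply pow_le. lra.
    + intro N. replace (rsum (fun n => G n y) N) with (rsum (fun n => G n y) (N + y - y)) by (f_equal; lia). rewrite <- (block G y (N + y)).
      transitivity (rsum (pz Cx) (tri (N + y))).
      * apply rsum_le. intros z _. unfold G, pz, Cx. destruct (y =? csnd z)%nat.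
        lra. apply Rmult_le_pos. apply pos_INR. apply pow_le. lra.
      * rewrite rsum_pz. pose proof (Bnd Cx Hbx (tri (N + y))).
        assert (INR (NT Cx (tri (N + y))) <= 2 ^ tri (N + y)).
        { replace (2 ^ tri (N + y)) with (INR (2 ^ tri (N + y))). apply le_INR. lia.
          rewrite pow_INR. simpl. reflexivity. }
        pose proof (pow2_inv (tri (N + y))). assert (0 <= (/2) ^ tri (N + y)) by (apply pow_le; lra). nra.
  - f_equal. apply functional_extensionality; intro n. unfold G, Wx. rewrite cnt_IO. reflexivity.
Qed.
End X.

End Main.


End P13.
Import P13.

Theorem mainTheorem12 : forall (k : nat) (f : PF k), PC k f -> PR k f.
Proof.
  intros k f [M HM].
  replace f with (OUTk M k).
  - apply PR_OUT. apply DL_Tf.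
  - apply functional_extensionality; intro x. apply functional_extensionality; intro y.
    rewrite HM. apply OUT_IO.
Qed.
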